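(* For any $n$ and $f$ with $f<\frac{n}{2}$, the reliable broadcast algorithm described in the context is an $f$-resilient Byzantine linearizable implementation of a reliable broadcast object for $n$ processes, $f$ of which may be Byzantine, provided that (A1) every correct process invokes methods of the reliable broadcast API infinitely often, and (A2) no correct process invokes broadcast$(ts,val)$ twice with the same $ts$.
   Context: Model: processes $\Pi=\{1,\dots,n\}$, asynchronous, communicating only through reliable single-writer multi-reader (SWMR) registers. An adversary may adaptively corrupt up to $f$ processes; corrupted (Byzantine) processes deviate arbitrarily (e.g. write arbitrary values to their own registers). Correct processes follow the algorithm and take infinitely many steps. PKI: $\langle x\rangle_p$ denotes $x$ signed by $p$; signatures are unforgeable. Reliable broadcast object (sequential specification): operations broadcast$(ts,v)$ and deliver$(j,ts)$; deliver$(j,ts)$ returns the value $v$ of the first broadcast$(ts,v)$ invoked by process $j$ before it, or $\bot$ if none. Correctness notions: a history $H$ is linearizable if there is a sequential history, obtained by removing some pending operations and completing others, preserving the real-time order of operations and satisfying the sequential specification. $H|_{correct}$ is the subsequence of events of correct processes. $H$ is Byzantine linearizable if some linearizable $H'$ has $H'|_{correct}=H|_{correct}$; an implementation is Byzantine linearizable if all its execution histories are. It is $f$-resilient if, whenever at most $f$ processes fail, every correct process eventually returns from each operation it invokes. Algorithm (code for process $i$): $i$ owns SWMR registers $send_i$, $echo_i$, $ready_i$, $deliver_i$ (the last three hold sets, initially empty). conflicting-echo$(\langle ts,v\rangle_j)$: reads all echo registers; returns true iff there exist $w\neq v$ and $k\in\Pi$ with $\langle ts,w\rangle_j\in echo_k$.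 broadcast$(ts,val)$: write $send_i\gets\langle ts,val\rangle_i$; then repeatedly call deliver$(i,ts)$ until it returns a value $\neq\bot$, and return. deliver$(j,ts)$: call refresh(); if there exist $k\in\Pi$ and $v$ such that $\langle\langle ts,v\rangle_j,\sigma\rangle\in deliver_k$ where $\sigma$ is a set of $f+1$ signatures of distinct processes on $\langle ready,\langle ts,v\rangle_j\rangle$, then add $\langle\langle ts,v\rangle_j,\sigma\rangle$ to $deliver_i$ and return $v$; otherwise return $\bot$. refresh(): for each $j\in[n]$: read $m\gets send_j$; if $m$ is not of the form $\langle ts,val\rangle_j$, skip to next $j$; add $m$ (signed by $i$) to $echo_i$; if not conflicting-echo$(m)$, add $\langle ready,m\rangle_i$ to $ready_i$; if there is $S\subseteq\Pi$ with $|S|\geq f+1$ such that $\langle ready,m\rangle_l\in ready_l$ for all $l\in S$, and not conflicting-echo$(m)$, then add $\langle m,\{\langle ready,m\rangle_l: l\in S\}\rangle$ to $deliver_i$. *)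

(* Defs.v *)
From HB Require Import structures.
From mathcomp Require Import all_boot.
From Stdlib Require List.
Set Implicit Arguments. Unset Strict Implicit. Unset Printing Implicit Defensive.

Section Model.
Variables (n f : nat) (V : eqType).
Local Notation proc := 'I_n.

(* Symbolic messages (PKI): MSig p m = <m>_p, MPair ts v = <ts,v>,     *)
(* MReady m = <ready,m>, MDel m sigma = <m,sigma>.                     *)
Inductive msg : Type :=
| MPair : nat -> V -> msg
| MSig : proc -> msg -> msg
| MReady : msg -> msg
| MDel : msg -> seq msg -> msg.

Fixpoint msg_eqb (a b : msg) {struct a} : bool :=
  match a, b with
  | MPair t v, MPair t' v' => (t == t') && (v == v')
  | MSig p m, MSig p' m' => (p == p') && msg_eqb m m'
  | MReady m, MReady m' => msg_eqb m m'
  | MDel m s, MDel m' s' =>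
      msg_eqb m m' &&
      (fix eqs (s1 s2 : seq msg) {struct s1} : bool :=
         match s1, s2 with
         | [::], [::] => true
         | x :: s1', y :: s2' => msg_eqb x y && eqs s1' s2'
         | _, _ => false
         end) s s'
  | _, _ => false
  end.

Inductive subterm : msg -> msg -> Prop :=
| st_refl m : subterm m m
| st_sig m' p m : subterm m' m -> subterm m' (MSig p m)
| st_ready m' m : subterm m' m -> subterm m' (MReady m)
| st_del1 m' m s : subterm m' m -> subterm m' (MDel m s)
| st_del2 m' m s x : List.In x s -> subterm m' x -> subterm m' (MDel m s).

(* Registers: every process owns send/echo/ready/deliver; a register   *)
(* holds a finite list of messages (send_i holds [:: m] or garbage).   *)
Inductive rkind := RSend | REcho | RReady | RDeliver.

Definition rk_eqb (a b : rkind) : bool :=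
  match a, b with
  | RSend, RSend | REcho, REcho | RReady, RReady | RDeliver, RDeliver => true
  | _, _ => false
  end.

Definition memory := proc -> rkind -> seq msg.

(* Programs of a correct process: one shared-register access per step. *)
Inductive prog : Type :=
| PRet : option V -> prog
| PRead : proc -> rkind -> (seq msg -> prog) -> prog
| PWrite : rkind -> (seq msg -> seq msg) -> prog -> prog.
(* PWrite k g p : write g(old content) into the own register of kind k
   (the single writer knows the content of its own register). *)

Definition add (x : msg) (s : seq msg) : seq msg :=
  if has (msg_eqb x) s then s else rcons s x.

Fixpoint read_all (k : rkind) (ps : seq proc) (acc : proc -> seq msg)
    (cont : (proc -> seq msg) -> prog) : prog :=
  match ps with
  | [::] => cont acc
  | p :: ps' =>
      PRead p k (fun x => read_all k ps' (fun q => if q == p then x else acc q) cont)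
  end.

Definition read_all_regs (k : rkind) (cont : (proc -> seq msg) -> prog) : prog :=
  read_all k (enum proc) (fun _ => [::]) cont.

Definition send_content (j : proc) (x : seq msg) : option (nat * V) :=
  match x with
  | [:: MSig p (MPair ts v)] => if p == j then Some (ts, v) else None
  | _ => None
  end.

Definition conflicting (echo : proc -> seq msg) (j : proc) (ts : nat) (v : V) : bool :=
  [exists k : proc, has (fun x => match x with
       | MSig k' (MSig j' (MPair ts' w)) =>
           [&& k' == k, j' == j, ts' == ts & w != v]
       | _ => false end) (echo k)].

Definition ready_ok (rd : proc -> seq msg) (m : msg) (l : proc) : bool :=
  has (msg_eqb (MSig l (MReady m))) (rd l).

Definition refresh_one (i j : proc) (cont : prog) : prog :=
  PRead j RSend (fun x =>
    match send_content j x with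
    | None => cont
    | Some (ts, v) =>
      let m := MSig j (MPair ts v) in
      PWrite REcho (add (MSig i m))
      (read_all_regs REcho (fun ech =>
        let after_ready :=
          read_all_regs RReady (fun rd =>
            let S := [seq l <- enum proc | ready_ok rd m l] in
            if f.+1 <= size S then
              read_all_regs REcho (fun ech2 =>
                if conflicting ech2 j ts v then cont
                else PWrite RDeliver
                       (add (MDel m [seq MSig l (MReady m) | l <- S])) cont)
            else cont) in
        if conflicting ech j ts v then after_ready
        else PWrite RReady (add (MSig i (MReady m))) after_ready))
    end).

Definition refresh (i : proc) (cont : prog) : prog :=
  foldr (refresh_one i) cont (enum proc).

Definition ready_signer (m : msg) (x : msg) : option proc :=
  match x with
  | MSig l (MReady m') => if msg_eqb m' m then Some l else None
  | _ => None
  end.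

Definition valid_cert (m : msg) (sigma : seq msg) : bool :=
  [&& all (fun x => ready_signer m x != None) sigma,
      uniq (pmap (ready_signer m) sigma) & f.+1 <= size sigma].

Definition cert_val (j : proc) (ts : nat) (x : msg) : option V :=
  match x with
  | MDel (MSig j' (MPair ts' v)) sigma =>
      if [&& j' == j, ts' == ts & valid_cert (MSig j (MPair ts v)) sigma]
      then Some v else None
  | _ => None
  end.

Definition find_cert (dl : proc -> seq msg) (j : proc) (ts : nat) : option (V * msg) :=
  ohead (pmap (fun x => omap (fun v => (v, x)) (cert_val j ts x))
              (flatten [seq dl k | k <- enum proc])).

Definition deliver_prog (i j : proc) (ts : nat) : prog :=
  refresh i (read_all_regs RDeliver (fun dl =>
    match find_cert dl j ts with
    | None => PRet None
    | Some (v, x) => PWrite RDeliver (add x) (PRet (Some v))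
    end)).

Inductive op := OBcast : nat -> V -> op | ODeliver : proc -> nat -> op.
Inductive resp := RAck : resp | RVal : option V -> resp.
Inductive event := EInv : proc -> op -> event | ERes : proc -> resp -> event.

Definition ev_proc (e : event) : proc :=
  match e with EInv p _ => p | ERes p _ => p end.

Definition history := nat -> option event.

(* broadcast(ts,val) by i: write send_i, then repeatedly deliver(i,ts) *)
Definition init_prog (i : proc) (o : op) : prog :=
  match o with
  | OBcast ts v => PWrite RSend (fun _ => [:: MSig i (MPair ts v)]) (deliver_prog i i ts)
  | ODeliver j ts => deliver_prog i j ts
  end.

Inductive lstate := Idle : lstate | Running : op -> prog -> lstate.

Record config := Config {
  cmem : memory;
  cloc : proc -> lstate;
  ccorr : {set proc} }.

Definition init_config : config :=
  Config (fun _ _ => [::]) (fun _ => Idle) set0.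

Inductive label :=
| LInvoke : proc -> op -> label
| LStep : proc -> label
| LCorrupt : proc -> label
| LByz : proc -> rkind -> seq msg -> label.

Definition upd_mem (m : memory) (p : proc) (k : rkind) (x : seq msg) : memory :=
  fun q k' => if (q == p) && rk_eqb k k' then x else m q k'.

Definition upd_loc (L : proc -> lstate) (p : proc) (s : lstate) : proc -> lstate :=
  fun q => if q == p then s else L q.

(* the transition function; None = label not enabled *)
Definition exec_step (c : config) (l : label) : option (config * option event) :=
  match l with
  | LInvoke p o =>
      if (p \notin ccorr c) then
        match cloc c p with
        | Idle => Some (Config (cmem c) (upd_loc (cloc c) p (Running o (init_prog p o))) (ccorr c),
                        Some (EInv p o))
        | Running _ _ => None
        end
      else None
  | LStep p =>
      if (p \notin ccorr c) then
        match cloc c p with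
        | Idle => None
        | Running o (PRead q k cont) =>
            Some (Config (cmem c) (upd_loc (cloc c) p (Running o (cont (cmem c q k)))) (ccorr c), None)
        | Running o (PWrite k g pr) =>
            Some (Config (upd_mem (cmem c) p k (g (cmem c p k)))
                         (upd_loc (cloc c) p (Running o pr)) (ccorr c), None)
        | Running (OBcast ts v) (PRet r) =>
            match r with
            | Some _ => Some (Config (cmem c) (upd_loc (cloc c) p Idle) (ccorr c),
                              Some (ERes p RAck))
            | None => Some (Config (cmem c)
                              (upd_loc (cloc c) p (Running (OBcast ts v) (deliver_prog p p ts)))
                              (ccorr c), None)
            end
        | Running (ODeliver _ _) (PRet r) =>
            Some (Config (cmem c) (upd_loc (cloc c) p Idle) (ccorr c), Some (ERes p (RVal r)))
        end
      else None
  | LCorrupt p =>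
      if (p \notin ccorr c) && (#|ccorr c| < f) then
        Some (Config (cmem c) (cloc c) (p |: ccorr c), None)
      else None
  | LByz p k x =>
      if p \in ccorr c then
        Some (Config (upd_mem (cmem c) p k x) (cloc c) (ccorr c), None)
      else None
  end.

Definition is_execution (c : nat -> config) (l : nat -> label) : Prop :=
  c 0 = init_config /\
  forall t, exists ev, exec_step (c t) (l t) = Some (c t.+1, ev).

Definition hist (c : nat -> config) (l : nat -> label) : history :=
  fun t => match exec_step (c t) (l t) with Some (_, ev) => ev | None => None end.

(* unforgeable signatures: a corrupted process can only write a signature
   of a not-(yet)-corrupted process if it already appeared in shared memory *)
Definition unforgeable (c : nat -> config) (l : nat -> label) : Prop :=
  forall t p k x y q m,
    l t = LByz p k x -> List.In y x -> subterm (MSig q m) y -> q \notin ccorr (c t) ->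
    exists t0 q0 k0 z, t0 <= t /\ List.In z (cmem (c t0) q0 k0) /\ subterm (MSig q m) z.

Definition correct (c : nat -> config) (p : proc) : Prop :=
  forall t, p \notin ccorr (c t).

Definition fair (c : nat -> config) (l : nat -> label) : Prop :=
  forall p, correct c p -> forall t o pr, cloc (c t) p = Running o pr ->
    exists t', t <= t' /\ l t' = LStep p.

Definition A1 (c : nat -> config) (l : nat -> label) : Prop :=
  forall p, correct c p -> forall t, cloc (c t) p = Idle ->
    exists t' o, t <= t' /\ l t' = LInvoke p o.

Definition A2 (c : nat -> config) (l : nat -> label) : Prop :=
  forall p, correct c p -> forall t1 t2 ts v1 v2,
    l t1 = LInvoke p (OBcast ts v1) -> l t2 = LInvoke p (OBcast ts v2) -> t1 = t2.

Definition ev_of (p : proc) (e : option event) : bool :=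
  if e is Some e' then ev_proc e' == p else false.
Definition is_inv (e : option event) : bool :=
  if e is Some (EInv _ _) then true else false.

Definition next_of (H : history) (p : proc) (i j : nat) : Prop :=
  i < j /\ ev_of p (H j) /\ forall k, i < k < j -> ~~ ev_of p (H k).

Definition wf_hist (H : history) : Prop :=
  forall p,
    (forall j, ev_of p (H j) -> (forall k, k < j -> ~~ ev_of p (H k)) -> is_inv (H j)) /\
    (forall i j, ev_of p (H i) -> next_of H p i j -> is_inv (H i) != is_inv (H j)).

Definition resp_at (H : history) (i j : nat) (r : resp) : Prop :=
  exists p o, H i = Some (EInv p o) /\ next_of H p i j /\ H j = Some (ERes p r).

Definition complete (H : history) (i : nat) : Prop := exists j r, resp_at H i j r.

Definition is_bcast_at (H : history) (lin : nat -> option (nat * resp))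
    (j : proc) (ts : nat) (k : nat) (v : V) : Prop :=
  exists i r, lin k = Some (i, r) /\ H i = Some (EInv j (OBcast ts v)).

Definition seq_spec (H : history) (lin : nat -> option (nat * resp))
    (k : nat) (o : op) (r : resp) : Prop :=
  match o with
  | OBcast _ _ => r = RAck
  | ODeliver j ts =>
      (forall k' v, k' < k -> is_bcast_at H lin j ts k' v ->
         (forall k'' v', k'' < k' -> ~ is_bcast_at H lin j ts k'' v') -> r = RVal (Some v)) /\
      ((forall k' v, k' < k -> ~ is_bcast_at H lin j ts k' v) -> r = RVal None)
  end.

(* lin : the sequential history; entry (i, r) = operation invoked at
   position i of H, completed with response r *)
Definition linearizable (H : history) : Prop :=
  wf_hist H /\
  exists lin : nat -> option (nat * resp),
    (forall k i r, lin k = Some (i, r) ->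
        is_inv (H i) /\ forall j r0, resp_at H i j r0 -> r = r0) /\
    (forall k1 k2 i r1 r2, lin k1 = Some (i, r1) -> lin k2 = Some (i, r2) -> k1 = k2) /\
    (forall i, complete H i -> exists k r, lin k = Some (i, r)) /\
    (* real-time order is preserved *)
    (forall a ja ra kb ib rb, resp_at H a ja ra -> ja < ib -> lin kb = Some (ib, rb) ->
        exists ka r, ka < kb /\ lin ka = Some (a, r)) /\
    (forall k i r p o, lin k = Some (i, r) -> H i = Some (EInv p o) -> seq_spec H lin k o r).

Definition cnt (P : event -> bool) (H : history) (i : nat) : nat :=
  count (fun t => if H t is Some e then P e else false) (iota 0 i).

Definition kth_ev (P : event -> bool) (H : history) (k : nat) (e : event) : Prop :=
  exists i, H i = Some e /\ P e /\ cnt P H i = k.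

Definition restr_eq (P : event -> bool) (H1 H2 : history) : Prop :=
  forall k e, kth_ev P H1 k e <-> kth_ev P H2 k e.

Definition byz_linearizable (Cor : proc -> Prop) (H : history) : Prop :=
  forall C : {set proc}, (forall p, p \in C <-> Cor p) ->
    exists H' : history, linearizable H' /\ restr_eq (fun e => ev_proc e \in C) H H'.

Definition resilient (c : nat -> config) (l : nat -> label) : Prop :=
  forall p, correct c p -> forall t o, l t = LInvoke p o ->
    exists t' r, t < t' /\ hist c l t' = Some (ERes p r).

End Model.

(* Main.v *)
Require Import Defs.
From HB Require Import structures.
From mathcomp Require Import all_boot.
From Stdlib Require List.
From Stdlib Require Import FunctionalExtensionality Lia Classical ClassicalEpsilon.
From mathcomp Require Import zify.
Set Implicit Arguments. Unset Strict Implicit. Unset Printing Implicit Defensive.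

Section Gen.
Variables (n f : nat) (V : eqType).
Local Notation proc := 'I_n.
Local Notation msg := (Defs.msg n V).
Local Notation prog := (Defs.prog n V).
Local Notation MPair := (@Defs.MPair n V).
Local Notation PRet := (@Defs.PRet n V).
Local Notation Idle := (@Defs.Idle n V).
Local Notation LStep := (@Defs.LStep n V).
Local Notation RAck := (@Defs.RAck V).
Local Notation OBcast := (@Defs.OBcast n V).
Local Notation ODeliver := (@Defs.ODeliver n V).
Local Notation LCorrupt := (@Defs.LCorrupt n V).
Local Notation deliver_prog := (@Defs.deliver_prog n f V).
Local Notation cert_val := (@Defs.cert_val n f V).
Local Notation find_cert := (@Defs.find_cert n f V).
Local Notation valid_cert := (@Defs.valid_cert n f V).
Local Notation init_prog := (@Defs.init_prog n f V).
Local Notation refresh := (@Defs.refresh n f V).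
Local Notation refresh_one := (@Defs.refresh_one n f V).
Local Notation exec_step := (@Defs.exec_step n f V).
Local Notation hist := (@Defs.hist n f V).
Local Notation is_execution := (@Defs.is_execution n f V).

Lemma msg_eqb_eq : forall a b : msg, msg_eqb a b -> a = b.
Proof.
fix IH 1 => a b; case: a => [t v|p m|m|m s]; case: b => [t' v'|p' m'|m'|m' s'] //=.
- by case/andP => /eqP -> /eqP ->.
- by case/andP => /eqP -> /IH ->.
- by move/IH ->.
- case/andP => /IH -> H; congr MDel.
  elim: s s' H => [|x s IHs] [|y s'] //= /andP [/IH -> /IHs ->] //.
Qed.

Lemma msg_eqb_refl : forall a : msg, msg_eqb a a.
Proof.
fix IH 1 => a; case: a => [t v|p m|m|m s] //=.
- by rewrite !eqxx.
- by rewrite eqxx IH.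
- rewrite IH /=; elim: s => [|x s IHs] //=; by rewrite IH IHs.
Qed.

Lemma msg_eqbP (a b : msg) : reflect (a = b) (msg_eqb a b).
Proof. apply: (iffP idP); [exact: msg_eqb_eq | move=> ->; exact: msg_eqb_refl]. Qed.

Lemma has_eqbP (x : msg) s : reflect (List.In x s) (has (msg_eqb x) s).
Proof.
elim: s => [|y s IHs] /=; first by constructor.
case: (msg_eqbP x y) => [->|Hne] /=; first by constructor; left.
apply: (iffP IHs) => [H|[H|H]] //; [by right | by case: Hne].
Qed.

Lemma In_add (x z : msg) s : List.In z (add x s) <-> z = x \/ List.In z s.
Proof.
rewrite /add; case: ifP => H.
- split; [by right|case=> // ->]. exact/has_eqbP.
- rewrite -cats1; split.
  + move=> Hz; case: (List.in_app_or _ _ _ Hz) => [Hs|[Hx|[]]]; [by right | by left].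
  + move=> [->|Hz]; apply: List.in_or_app; [by right; left | by left].
Qed.

Lemma In_add_old (x z : msg) s : List.In z s -> List.In z (add x s).
Proof. by move=> Hz; apply/In_add; right. Qed.

Lemma In_add_new (x : msg) s : List.In x (add x s).
Proof. by apply/In_add; left. Qed.


Lemma subterm_trans (a b d : msg) : subterm a b -> subterm b d -> subterm a d.
Proof.
move=> Hab Hbd; elim: Hbd Hab => //; clear.
- by move=> m' p m _ IH /IH; apply: st_sig.
- by move=> m' m _ IH /IH; apply: st_ready.
- by move=> m' m s _ IH /IH; apply: st_del1.
- by move=> m' m s x Hx _ IH /IH; apply: st_del2.
Qed.

Lemma subterm_sig_inv (q p : proc) (w y : msg) :
  subterm (MSig q w) (MSig p y) -> (q = p /\ w = y) \/ subterm (MSig q w) y.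
Proof. by move=> H; inversion H; subst; [left|right]. Qed.

Lemma subterm_pair_inv (q : proc) (w : msg) ts v :
  ~ subterm (MSig q w) (MPair ts v).
Proof. by move=> H; inversion H. Qed.

Lemma subterm_ready_inv (q : proc) (w m : msg) :
  subterm (MSig q w) (MReady m) -> subterm (MSig q w) m.
Proof. by move=> H; inversion H; subst. Qed.

Lemma subterm_del_inv (q : proc) (w m : msg) s :
  subterm (MSig q w) (MDel m s) -> subterm (MSig q w) m \/ exists x, List.In x s /\ subterm (MSig q w) x.
Proof. move=> H; inversion H; subst; [by left| right; by exists x]. Qed.

Lemma send_contentP (j : proc) x ts v :
  send_content j x = Some (ts, v) -> x = [:: MSig j (MPair ts v)].
Proof.
case: x => [|[] // p [] // ts' v' [|]] //=; case: eqP => // -> [-> ->] //.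
Qed.

Lemma send_content_mk (j : proc) ts v :
  send_content j [:: MSig j (MPair ts v)] = Some (ts, v).
Proof. by rewrite /= eqxx. Qed.

Lemma ohead_pmapP (A B : Type) (F : A -> option B) s y :
  ohead (pmap F s) = Some y -> exists x, List.In x s /\ F x = Some y.
Proof.
elim: s => [|x s IHs] //=; case E: (F x) => [b|] /=.
- by case=> <-; exists x; split; [left|].
- by move/IHs => [z [Hz Fz]]; exists z; split; [right|].
Qed.

Lemma ohead_pmapN (A B : Type) (F : A -> option B) s :
  ohead (pmap F s) = None -> forall x, List.In x s -> F x = None.
Proof.
elim: s => [|x s IHs] //= H z [<-|Hz].
- by move: H; case: (F x).
- by apply: IHs => //; move: H; case: (F x).
Qed.

Lemma In_flatten_gen (dl : proc -> seq msg) x (ks : seq proc) :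
  List.In x (flatten [seq dl k | k <- ks]) <-> exists k, k \in ks /\ List.In x (dl k).
Proof.
elim: ks => [|k0 ks IH] /=; first by split => // [[k []]].
split.
- move=> H; case: (List.in_app_or _ _ _ H) => [H1|/IH [k [Hk H2]]].
  + by exists k0; rewrite inE eqxx.
  + by exists k; rewrite inE Hk orbT.
- move=> [k []]; rewrite inE => /orP [/eqP ->|Hk] Hx; apply: List.in_or_app; first by left.
  by right; apply/IH; exists k.
Qed.

Lemma In_flatten_dl (dl : proc -> seq msg) x :
  List.In x (flatten [seq dl k | k <- enum proc]) <-> exists k, List.In x (dl k).
Proof.
rewrite In_flatten_gen; split => [[k [_ H]]|[k H]]; exists k => //; by rewrite mem_enum.
Qed.

Definition cert_fun (j : proc) ts (x : msg) := omap (fun v => (v, x)) (cert_val j ts x).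

Lemma find_certS (dl : proc -> seq msg) j ts v x :
  find_cert dl j ts = Some (v, x) -> (exists k, List.In x (dl k)) /\ cert_val j ts x = Some v.
Proof.
rewrite /find_cert => H; have [y [Hy Fy]] := ohead_pmapP H.
move: Fy; case E: (cert_val j ts y) => [w|] //= [<- <-]; split => //.
exact/In_flatten_dl.
Qed.

Lemma find_certN (dl : proc -> seq msg) j ts :
  find_cert dl j ts = None -> forall k x, List.In x (dl k) -> cert_val j ts x = None.
Proof.
rewrite /find_cert => H0 k x Hx; have H := ohead_pmapN H0.
have := H x; rewrite In_flatten_dl => /(_ (ex_intro _ k Hx)).
by case: (cert_val j ts x).
Qed.

Definition conf_entry (k j : proc) ts (v : V) (x : msg) : bool :=
  match x with
  | MSig k' (MSig j' (Defs.MPair ts' w)) => [&& k' == k, j' == j, ts' == ts & w != v]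
  | _ => false end.

Lemma conflictingE (ech : proc -> seq msg) j ts v :
  conflicting ech j ts v = [exists k, has (conf_entry k j ts v) (ech k)].
Proof. by []. Qed.

Lemma conflictingN (ech : proc -> seq msg) j ts v :
  conflicting ech j ts v = false -> forall k, ~~ has (conf_entry k j ts v) (ech k).
Proof.
rewrite conflictingE => /negbT; rewrite negb_exists => /forallP H k; exact: H.
Qed.

Lemma conflictingF (ech : proc -> seq msg) j ts v :
  (forall k, ~~ has (conf_entry k j ts v) (ech k)) -> conflicting ech j ts v = false.
Proof.
move=> H; rewrite conflictingE; apply/negbTE; rewrite negb_exists; apply/forallP => k; exact: H.
Qed.

Section Ev.
Variable A : proc -> rkind -> seq msg -> Prop.

Inductive EvR (Q : prog -> Prop) : prog -> Prop :=
| ev_here pr : Q pr -> EvR Q pr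
| ev_read q k cont : (forall x, A q k x -> EvR Q (cont x)) -> EvR Q (PRead q k cont)
| ev_write k g pr : EvR Q pr -> EvR Q (PWrite k g pr).

Lemma ev_trans (Q Q' : prog -> Prop) pr :
  EvR Q pr -> (forall pr', Q pr' -> EvR Q' pr') -> EvR Q' pr.
Proof.
move=> H HQ; elim: H => {pr} [pr /HQ //|q k cont _ IH|k g pr _ IH].
- by apply: ev_read => x /IH.
- exact: ev_write.
Qed.

Lemma ev_read_all (Q : prog -> Prop) k (ps : seq proc) (acc : proc -> seq msg) cont :
  (forall acc' : proc -> seq msg,
     (forall q, (q \in ps -> A q k (acc' q)) /\ (q \notin ps -> acc' q = acc q)) ->
     EvR Q (cont acc')) ->
  EvR Q (read_all k ps acc cont).
Proof.
elim: ps acc => [|p ps IH] acc H /=.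
- by apply: H => q; split.
- apply: ev_read => x Ax; apply: IH => acc' Hacc'; apply: H => q.
  have [H1 H2] := Hacc' q; split.
  + rewrite inE; case: (boolP (q \in ps)) => [/H1 //|Hq]; rewrite orbF => /eqP Eq.
    by rewrite (H2 Hq) Eq eqxx.
  + rewrite inE negb_or => /andP [Hqp Hq]; by rewrite (H2 Hq) (negbTE Hqp).
Qed.

Lemma ev_ret pr : EvR (fun pr' => exists r, pr' = PRet r) pr.
Proof.
elim: pr => [r|q k cont IH|k g pr IH].
- by apply: ev_here; exists r.
- by apply: ev_read => x _; exact: IH.
- exact: ev_write.
Qed.

Lemma ev_refresh_one (p j : proc) cont : EvR (eq cont) (refresh_one p j cont).
Proof.
rewrite /refresh_one; apply: ev_read => x _.
case: (send_content j x) => [[ts v]|]; last exact: ev_here.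
apply: ev_write; apply: ev_read_all => ech _.
case: ifP => _; last apply: ev_write;
apply: ev_read_all => rd _; (case: ifP => _; last exact: ev_here);
apply: ev_read_all => ech2 _; (case: ifP => _; first exact: ev_here);
apply: ev_write; exact: ev_here.
Qed.

Lemma ev_foldr_end (p : proc) K js : EvR (eq K) (foldr (refresh_one p) K js).
Proof.
elim: js => [|j js IH] /=; first exact: ev_here.
apply: ev_trans (ev_refresh_one p j _) _ => _ <-; exact: IH.
Qed.

Lemma ev_foldr_at (p j : proc) K js : j \in js ->
  EvR (fun pr => exists js', pr = refresh_one p j (foldr (refresh_one p) K js')) (foldr (refresh_one p) K js).
Proof.
elim: js => [|j0 js IH] //=; rewrite inE; case: (eqVneq j j0) => [->|Hne] /= H.
- by apply: ev_here; exists js.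
- apply: ev_trans (ev_refresh_one p j0 _) _ => _ <-; exact: IH.
Qed.
End Ev.

End Gen.

Section Exec.
Variables (n f : nat) (V : eqType).
Local Notation proc := 'I_n.
Local Notation msg := (Defs.msg n V).
Local Notation prog := (Defs.prog n V).
Local Notation MPair := (@Defs.MPair n V).
Local Notation PRet := (@Defs.PRet n V).
Local Notation Idle := (@Defs.Idle n V).
Local Notation LStep := (@Defs.LStep n V).
Local Notation RAck := (@Defs.RAck V).
Local Notation OBcast := (@Defs.OBcast n V).
Local Notation ODeliver := (@Defs.ODeliver n V).
Local Notation LCorrupt := (@Defs.LCorrupt n V).
Local Notation deliver_prog := (@Defs.deliver_prog n f V).
Local Notation cert_val := (@Defs.cert_val n f V).
Local Notation find_cert := (@Defs.find_cert n f V).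
Local Notation valid_cert := (@Defs.valid_cert n f V).
Local Notation init_prog := (@Defs.init_prog n f V).
Local Notation refresh := (@Defs.refresh n f V).
Local Notation refresh_one := (@Defs.refresh_one n f V).
Local Notation exec_step := (@Defs.exec_step n f V).
Local Notation hist := (@Defs.hist n f V).
Local Notation is_execution := (@Defs.is_execution n f V).

Local Notation Running := (@Defs.Running n V).
Local Notation config := (Defs.config n V).
Local Notation label := (Defs.label n V).

Variables (c : nat -> config) (l : nat -> label).
Hypothesis Hexec : is_execution c l.

Local Notation mem t := (cmem (c t)).
Local Notation loc t := (cloc (c t)).
Local Notation corr t := (ccorr (c t)).

Inductive step_case (t : nat) : Prop :=
| SInv p o : l t = LInvoke p o -> p \notin corr t -> loc t p = Idle ->
    c t.+1 = Config (mem t) (upd_loc (loc t) p (Running o (init_prog p o))) (corr t) ->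
    hist c l t = Some (EInv p o) -> step_case t
| SRead p o q k cont : l t = LStep p -> p \notin corr t -> loc t p = Running o (PRead q k cont) ->
    c t.+1 = Config (mem t) (upd_loc (loc t) p (Running o (cont (mem t q k)))) (corr t) ->
    hist c l t = None -> step_case t
| SWrite p o k g pr : l t = LStep p -> p \notin corr t -> loc t p = Running o (PWrite k g pr) ->
    c t.+1 = Config (upd_mem (mem t) p k (g (mem t p k))) (upd_loc (loc t) p (Running o pr)) (corr t) ->
    hist c l t = None -> step_case t
| SRetBS p ts v w : l t = LStep p -> p \notin corr t -> loc t p = Running (OBcast ts v) (PRet (Some w)) ->
    c t.+1 = Config (mem t) (upd_loc (loc t) p Idle) (corr t) ->
    hist c l t = Some (ERes p RAck) -> step_case t
| SRetBN p ts v : l t = LStep p -> p \notin corr t -> loc t p = Running (OBcast ts v) (PRet None) ->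
    c t.+1 = Config (mem t) (upd_loc (loc t) p (Running (OBcast ts v) (deliver_prog p p ts))) (corr t) ->
    hist c l t = None -> step_case t
| SRetD p j ts r : l t = LStep p -> p \notin corr t -> loc t p = Running (ODeliver j ts) (PRet r) ->
    c t.+1 = Config (mem t) (upd_loc (loc t) p Idle) (corr t) ->
    hist c l t = Some (ERes p (RVal r)) -> step_case t
| SCorr p : l t = LCorrupt p -> p \notin corr t -> #|corr t| < f ->
    c t.+1 = Config (mem t) (loc t) (p |: corr t) -> hist c l t = None -> step_case t
| SByz p k x : l t = LByz p k x -> p \in corr t ->
    c t.+1 = Config (upd_mem (mem t) p k x) (loc t) (corr t) -> hist c l t = None -> step_case t.

Lemma step_inv t : step_case t.
Proof.
case: Hexec => _ /(_ t) [ev E].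
have Hh : hist c l t = ev by rewrite /hist E.
move: E Hh; case El: (l t) => [p o|p|p|p k x] /=.
- case: ifP => // Hp; case Hl: (loc t p) => [|o' pr] // [Ec <-] Hh.
  exact: SInv El Hp Hl (esym Ec) Hh.
- case: ifP => // Hp; case Hl: (loc t p) => [|o' pr] //;
  case: pr Hl => [r|q k cont|k g pr] Hl; case: o' Hl => [ts v|j ts] Hl.
  + case: r Hl => [w|] Hl [Ec <-] Hh.
    * exact: SRetBS El Hp Hl (esym Ec) Hh.
    * exact: SRetBN El Hp Hl (esym Ec) Hh.
  + case=> [Ec <-] Hh; exact: SRetD El Hp Hl (esym Ec) Hh.
  + case=> [Ec <-] Hh; exact: SRead El Hp Hl (esym Ec) Hh.
  + case=> [Ec <-] Hh; exact: SRead El Hp Hl (esym Ec) Hh.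
  + case=> [Ec <-] Hh; exact: SWrite El Hp Hl (esym Ec) Hh.
  + case=> [Ec <-] Hh; exact: SWrite El Hp Hl (esym Ec) Hh.
- case: ifP => // /andP [Hp Hc] [Ec <-] Hh; exact: SCorr El Hp Hc (esym Ec) Hh.
- case: ifP => // Hp [Ec <-] Hh; exact: SByz El Hp (esym Ec) Hh.
Qed.

Lemma corr_step t : corr t \subset corr t.+1.
Proof.
case: (step_inv t) => [p o El Hp Hl E Hh|p o q0 k0 cont El Hp Hl E Hh|p o k g pr El Hp Hl E Hh|p ts v w El Hp Hl E Hh|p ts v El Hp Hl E Hh|p j ts r El Hp Hl E Hh|p El Hp Hc E Hh|p k x El Hp E Hh]; rewrite E //=; exact: subsetUr.
Qed.

Lemma corr_mono t t' : t <= t' -> corr t \subset corr t'.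
Proof.
move=> /subnK <-; elim: (t' - t) => [|d IH] //=; rewrite addSn.
exact: subset_trans IH (corr_step _).
Qed.

Lemma card_corr t : #|corr t| <= f.
Proof.
elim: t => [|t IH]; first by case: Hexec => -> _; rewrite /= cards0.
case: (step_inv t) => [p o El Hp Hl E Hh|p o q0 k0 cont El Hp Hl E Hh|p o k g pr El Hp Hl E Hh|p ts v w El Hp Hl E Hh|p ts v El Hp Hl E Hh|p j ts r El Hp Hl E Hh|p El Hp Hc E Hh|p k x El Hp E Hh]; rewrite E //=.
by rewrite cardsU1 Hp add1n.
Qed.

Lemma loc_other t q : (forall o, l t <> LInvoke q o) -> l t <> LStep q -> loc t.+1 q = loc t q.
Proof.
move=> H1 H2; case: (step_inv t) => [p o El Hp Hl E Hh|p o q0 k0 cont El Hp Hl E Hh|p o k g pr El Hp Hl E Hh|p ts v w El Hp Hl E Hh|p ts v El Hp Hl E Hh|p j ts r El Hp Hl E Hh|p El Hp Hc E Hh|p k x El Hp E Hh]; rewrite E //= /upd_loc;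
  case: eqP => // Eq; subst; by first [case: (H1 _ El) | case: (H2 El)].
Qed.

Lemma mem_other t q : l t <> LStep q -> (forall k x, l t <> LByz q k x) -> mem t.+1 q = mem t q.
Proof.
move=> H1 H2; case: (step_inv t) => [p o El Hp Hl E Hh|p o q0 k0 cont El Hp Hl E Hh|p o k g pr El Hp Hl E Hh|p ts v w El Hp Hl E Hh|p ts v El Hp Hl E Hh|p j ts r El Hp Hl E Hh|p El Hp Hc E Hh|p k x El Hp E Hh]; rewrite E //= /upd_mem;
  apply: functional_extensionality_dep => k'; (case: eqP => //= Eq; subst; by first [case: (H1 El) | case: (H2 _ _ El)]).
Qed.

End Exec.

Section Safe.
Variables (n f : nat) (V : eqType).
Local Notation proc := 'I_n.
Local Notation msg := (Defs.msg n V).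
Local Notation prog := (Defs.prog n V).
Local Notation MPair := (@Defs.MPair n V).
Local Notation PRet := (@Defs.PRet n V).
Local Notation Idle := (@Defs.Idle n V).
Local Notation LStep := (@Defs.LStep n V).
Local Notation RAck := (@Defs.RAck V).
Local Notation OBcast := (@Defs.OBcast n V).
Local Notation ODeliver := (@Defs.ODeliver n V).
Local Notation LCorrupt := (@Defs.LCorrupt n V).
Local Notation deliver_prog := (@Defs.deliver_prog n f V).
Local Notation cert_val := (@Defs.cert_val n f V).
Local Notation find_cert := (@Defs.find_cert n f V).
Local Notation valid_cert := (@Defs.valid_cert n f V).
Local Notation init_prog := (@Defs.init_prog n f V).
Local Notation refresh := (@Defs.refresh n f V).
Local Notation refresh_one := (@Defs.refresh_one n f V).
Local Notation exec_step := (@Defs.exec_step n f V).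
Local Notation hist := (@Defs.hist n f V).
Local Notation is_execution := (@Defs.is_execution n f V).

Local Notation Running := (@Defs.Running n V).
Local Notation config := (Defs.config n V).
Local Notation label := (Defs.label n V).
Local Notation op := (Defs.op n V).

Variables (c : nat -> config) (l : nat -> label).
Hypothesis Hexec : is_execution c l.

Local Notation mem t := (cmem (c t)).
Local Notation loc t := (cloc (c t)).
Local Notation corr t := (ccorr (c t)).

Definition Appeared t (s : msg) :=
  exists t0 q0 k0 z0, t0 <= t /\ List.In z0 (mem t0 q0 k0) /\ subterm s z0.

Definition ReadyCond (q : proc) (m : msg) (t : nat) :=
  exists j ts v te, m = MSig j (MPair ts v) /\ te <= t /\ List.In (MSig q m) (mem te q REcho) /\
    forall k, exists tk, te <= tk <= t /\ ~~ has (conf_entry k j ts v) (mem tk k REcho).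

Definition OwnOK (q : proc) (w : msg) (t : nat) : Prop :=
  match w with
  | Defs.MPair ts v => exists t0, t0 < t /\ l t0 = LInvoke q (OBcast ts v)
  | MReady m => ReadyCond q m t
  | _ => True
  end.

Definition SigOK (p : proc) t (x : msg) :=
  forall q w, subterm (MSig q w) x -> (q = p /\ OwnOK p w t) \/ Appeared t (MSig q w).

Definition WriteOK (p : proc) (o : op) ti t k (old y : seq msg) :=
  (k = RSend /\ exists ts v, o = OBcast ts v /\ y = [:: MSig p (MPair ts v)] /\ ti < t /\ l ti = LInvoke p o)
  \/ (k <> RSend /\ exists x, y = add x old /\ SigOK p t x).

Definition RetOK (p : proc) (o : op) ti t (r : option V) : Prop :=
  match o with
  | Defs.ODeliver j ts =>
      match r with
      | None => exists s, ti < s <= t /\ forall q, exists tq, s <= tq <= t /\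
                  forall x, List.In x (mem tq q RDeliver) -> cert_val j ts x = None
      | Some v => exists w x, ti < w < t /\ cert_val j ts x = Some v /\ List.In x (mem w.+1 p RDeliver)
      end
  | Defs.OBcast ts _ =>
      match r with
      | Some v => exists w x, ti < w < t /\ cert_val p ts x = Some v /\ List.In x (mem w.+1 p RDeliver)
      | None => True
      end
  end.

Fixpoint Safe (p : proc) (o : op) ti t (pr : prog) {struct pr} : Prop :=
  match pr with
  | Defs.PRet r => forall t', t <= t' -> RetOK p o ti t' r
  | PRead q k cont => forall t', t <= t' -> Safe p o ti t'.+1 (cont (mem t' q k))
  | PWrite k g pr' => forall t', t <= t' -> mem t'.+1 p k = g (mem t' p k) ->
      WriteOK p o ti t' k (mem t' p k) (g (mem t' p k)) /\ Safe p o ti t'.+1 pr'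
  end.

Lemma Safe_mono p o ti t t2 pr : t <= t2 -> Safe p o ti t pr -> Safe p o ti t2 pr.
Proof.
case: pr => [r|q k cont|k g pr] /= Ht H t' Ht'; apply: H; exact: leq_trans Ht Ht'.
Qed.

Lemma safe_read_all p o ti t k (ps : seq proc) (acc : proc -> seq msg) cont :
  (forall t'' (acc' : proc -> seq msg), t <= t'' ->
     (forall q, (q \in ps -> exists tq, t <= tq < t'' /\ acc' q = mem tq q k) /\ (q \notin ps -> acc' q = acc q)) ->
     Safe p o ti t'' (cont acc')) ->
  Safe p o ti t (read_all k ps acc cont).
Proof.
elim: ps acc t => [|p0 ps IH] acc t H /=.
- by apply: H => // q; split.
- move=> t' Ht'; apply: IH => t'' acc' Ht'' Hacc'; apply: H; first by apply: leq_trans Ht' _; apply: ltnW.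
  move=> q; have [H1 H2] := Hacc' q; split.
  + rewrite inE; case: (boolP (q \in ps)) => [Hq _|Hq]; first by have [tq [/andP [Htq1 Htq2] E]] := H1 Hq;
      exists tq; rewrite E Htq2 (leq_trans Ht' (ltnW Htq1)).
    rewrite orbF => /eqP Eq; rewrite (H2 Hq) Eq eqxx; exists t'; by rewrite Ht' Ht''.
  + rewrite inE negb_or => /andP [Hqp Hq]; by rewrite (H2 Hq) (negbTE Hqp).
Qed.

Lemma rk_eqb_refl k : rk_eqb k k.
Proof. by case: k. Qed.

Lemma safe_refresh_one p o ti t j cont :
  Safe p o ti t cont -> Safe p o ti t (refresh_one p j cont).
Proof.
move=> Hc; rewrite /refresh_one /= => t1 Ht1.
case Es: (send_content j (mem t1 j RSend)) => [[ts v]|]; last exact: Safe_mono (leq_trans Ht1 (leqnSn _)) Hc.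
have Hx := send_contentP Es.
have Happ : forall t' q w, t1 <= t' -> subterm (MSig q w) (MSig j (MPair ts v)) -> Appeared t' (MSig q w).
  move=> t' q w Ht' Hs; exists t1, j, RSend, (MSig j (MPair ts v)); split => //; split => //; by rewrite Hx; left.
move=> /= t2 Ht2 Hm2; split.
  right; split => //; exists (MSig p (MSig j (MPair ts v))); split => // q w Hs.
  case: (subterm_sig_inv Hs) => [[-> ->]|Hs']; first by left.
  right; apply: Happ Hs'; exact: leq_trans (leqnSn _) Ht2.
have Ht12 : t1 <= t2 by exact: leq_trans (leqnSn _) Ht2.
rewrite /read_all_regs; apply: safe_read_all => t3 ech Ht3 Hech.
have HAR : Safe p o ti t3 (read_all_regs RReady (fun rd =>
   let S := [seq l <- enum proc | ready_ok rd (MSig j (MPair ts v)) l] in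
   if f.+1 <= size S then
     read_all_regs REcho (fun ech2 =>
       if conflicting ech2 j ts v then cont
       else PWrite RDeliver (add (MDel (MSig j (MPair ts v)) [seq MSig l (MReady (MSig j (MPair ts v))) | l <- S])) cont)
   else cont)).
  rewrite /read_all_regs; apply: safe_read_all => t5 rd Ht5 Hrd /=.
  case: ifP => Hsz; last by apply: Safe_mono Hc; lia.
  apply: safe_read_all => t6 ech2 Ht6 _.
  case: ifP => _; first by apply: Safe_mono Hc; lia.
  move=> /= t7 Ht7 Hm7; split; last by apply: Safe_mono Hc; lia.
  right; split => //; eexists; split; first reflexivity.
  move=> q w Hs; right; case: (subterm_del_inv Hs) => [Hs1|[y [Hy Hs2]]].
    apply: Happ Hs1; lia.
  move: Hy => /List.in_map_iff [l0 [Ey Hl0]]; subst y.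
  move: Hl0 => /(@List.filter_In _ _ _) [_ Hrdy].
  move: Hrdy; rewrite /ready_ok => /has_eqbP Hin.
  have Hl0e : l0 \in enum proc by rewrite mem_enum.
  have [Hl _] := Hrd l0; have [tl [/andP [Htl1 Htl2] El]] := Hl Hl0e.
  exists tl, l0, RReady, (MSig l0 (MReady (MSig j (MPair ts v)))); split; last by rewrite -El.
  lia.
move=> /=; case: ifP => Hconf; first exact: HAR.
move=> t4 Ht4 Hm4; split; last by apply: Safe_mono HAR; exact: leq_trans Ht4 (leqnSn _).
right; split => //; eexists; split; first reflexivity.
move=> q w Hs; case: (subterm_sig_inv Hs) => [[-> ->]|Hs'].
  left; split => //=; exists j, ts, v, t2.+1; split => //; split; first by apply: leq_trans Ht3 Ht4.
  split; first by rewrite Hm2 /=; exact: In_add_new.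
  move=> k; have Hke : k \in enum proc by rewrite mem_enum.
  have [Hk _] := Hech k; have [tk [/andP [Htk1 Htk2] Ek]] := Hk Hke.
  exists tk; rewrite Htk1 (leq_trans (ltnW Htk2) Ht4); split => //; rewrite -Ek.
  exact: conflictingN Hconf k.
right; apply: Happ (subterm_ready_inv Hs'); lia.
Qed.

Lemma safe_foldr p o ti t K js :
  Safe p o ti t K -> Safe p o ti t (foldr (refresh_one p) K js).
Proof. move=> HK; elim: js => [|j js IH] //=; exact: safe_refresh_one. Qed.

Definition OpTail (p : proc) (o : op) (j : proc) ts :=
  o = ODeliver j ts \/ exists v0, o = OBcast ts v0 /\ j = p.

Lemma safe_deliver p o ti t j ts :
  OpTail p o j ts -> ti < t -> Safe p o ti t (deliver_prog p j ts).
Proof.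
move=> Ho Hti; rewrite /deliver_prog /refresh; apply: safe_foldr.
rewrite /read_all_regs; apply: safe_read_all => t' dl Ht' Hdl.
case Ef: (find_cert dl j ts) => [[v x]|] /=.
- move=> t2 Ht2 Hm2; split.
    right; split => //; exists x; split => // q w Hs; right.
    have [[k Hk] _] := find_certS Ef.
    have Hke : k \in enum proc by rewrite mem_enum.
    have [Hk1 _] := Hdl k; have [tk [/andP [Htk1 Htk2] Ek]] := Hk1 Hke.
    exists tk, k, RDeliver, x; split; first lia. by rewrite -Ek.
  move=> t3 Ht3; have [_ Hc] := find_certS Ef.
  have Hin : List.In x (mem t2.+1 p RDeliver) by rewrite Hm2; exact: In_add_new.
  case: Ho => [->|[v0 [-> Ej]]] /=; exists t2, x; (split; first lia); [by [] | by subst j].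
- move=> t3 Ht3; case: Ho => [->|[v0 [-> _]]] //=.
  exists t; split; first lia.
  move=> q; have Hqe : q \in enum proc by rewrite mem_enum.
  have [Hq1 _] := Hdl q; have [tq [/andP [Htq1 Htq2] Eq]] := Hq1 Hqe.
  exists tq; split; first lia.
  move=> x; rewrite -Eq; exact: find_certN Ef q x.
Qed.

Lemma safe_init p o ti : l ti = LInvoke p o -> Safe p o ti ti.+1 (init_prog p o).
Proof.
move=> Hl; case: o Hl => [ts v|j ts] Hl /=.
- move=> t' Ht' _; split.
    left; split => //; exists ts, v; split => //; split => //; split => //; lia.
  apply: safe_deliver; [right; by exists v | lia].
- apply: safe_deliver; [by left | lia].
Qed.

End Safe.

Section Inv.
Variables (n f : nat) (V : eqType).
Local Notation proc := 'I_n.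
Local Notation msg := (Defs.msg n V).
Local Notation prog := (Defs.prog n V).
Local Notation MPair := (@Defs.MPair n V).
Local Notation PRet := (@Defs.PRet n V).
Local Notation Idle := (@Defs.Idle n V).
Local Notation LStep := (@Defs.LStep n V).
Local Notation RAck := (@Defs.RAck V).
Local Notation OBcast := (@Defs.OBcast n V).
Local Notation ODeliver := (@Defs.ODeliver n V).
Local Notation LCorrupt := (@Defs.LCorrupt n V).
Local Notation deliver_prog := (@Defs.deliver_prog n f V).
Local Notation cert_val := (@Defs.cert_val n f V).
Local Notation find_cert := (@Defs.find_cert n f V).
Local Notation valid_cert := (@Defs.valid_cert n f V).
Local Notation init_prog := (@Defs.init_prog n f V).
Local Notation refresh := (@Defs.refresh n f V).
Local Notation refresh_one := (@Defs.refresh_one n f V).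
Local Notation exec_step := (@Defs.exec_step n f V).
Local Notation hist := (@Defs.hist n f V).
Local Notation is_execution := (@Defs.is_execution n f V).

Local Notation Running := (@Defs.Running n V).
Local Notation config := (Defs.config n V).
Local Notation label := (Defs.label n V).
Local Notation op := (Defs.op n V).

Variables (c : nat -> config) (l : nat -> label).
Hypothesis Hexec : is_execution c l.

Local Notation mem t := (cmem (c t)).
Local Notation loc t := (cloc (c t)).
Local Notation corr t := (ccorr (c t)).
Local Notation H := (hist c l).
Local Notation Safe := (@Safe n f V c l).

Definition InvP t p o pr :=
  exists ti, ti < t /\ l ti = LInvoke p o /\ H ti = Some (EInv p o) /\
   (forall s, ti < s < t -> ~~ ev_of p (H s)) /\
   (forall s, ti < s <= t -> exists pr', loc s p = Running o pr') /\
   Safe p o ti t pr.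

Definition Inv t := forall p o pr, p \notin corr t -> loc t p = Running o pr -> InvP t p o pr.

Lemma inv_keep t p o pr : InvP t p o pr -> loc t.+1 p = Running o pr -> ~~ ev_of p (H t) ->
  InvP t.+1 p o pr.
Proof.
move=> [ti [Hti [Hl [Hh [Hev [Hrun Hs]]]]]] Hl' Hevt; exists ti; split; first lia.
do 2 (split => //); split.
  move=> s /andP [H1 H2]; case: (ltngtP s t) => [Hst||->] //; [apply: Hev; lia | lia].
split; last by apply: Safe_mono Hs.
move=> s /andP [H1 H2]; case: (ltngtP s t.+1) => [Hst||->]; [apply: Hrun; lia|lia|by exists pr].
Qed.

Lemma Inv_all t : Inv t.
Proof.
elim: t => [|t IH].
  move=> p o pr _; case: Hexec => -> _ //.
move=> p o pr Hp Hl'.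
have Hpt : p \notin corr t by apply: contra Hp => H0; exact: (subsetP (corr_step Hexec t)) _ H0.
case: (step_inv Hexec t) => [q o' El Hq Hl E Hh|q o' q0 k0 cont El Hq Hl E Hh|q o' k g pr' El Hq Hl E Hh
  |q ts v w El Hq Hl E Hh|q ts v El Hq Hl E Hh|q j ts r El Hq Hl E Hh|q El Hq Hc E Hh|q k x El Hq E Hh];
  rewrite E /= /upd_loc in Hl'; rewrite ?E /=.
- case: eqP Hl' => [Epq|Hne] Hl'.
  + subst q; case: Hl' => <- <-; exists t; split => //; split => //; split => //; split.
      move=> s; lia.
    split; last exact: safe_init.
    move=> s Hs; have -> : s = t.+1 by lia. by rewrite E /= /upd_loc eqxx; eexists.
  + have Hl0 : loc t p = Running o pr by [].
    apply: inv_keep (IH _ _ _ Hpt Hl0) _ _; first by rewrite E /= /upd_loc; case: eqP.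
    rewrite Hh /=; apply/eqP => Eq; by apply: Hne.
- case: eqP Hl' => [Epq|Hne] Hl'.
  + subst q; case: Hl' => <- <-.
    have [ti [Hti [Hli [Hhi [Hev [Hrun Hs]]]]]] := IH _ _ _ Hpt Hl.
    exists ti; split; first lia. do 2 (split => //); split.
      move=> s /andP [H1 H2]; case: (ltngtP s t) => [Hst||->]; [apply: Hev; lia|lia|by rewrite Hh].
    split; last exact: Hs.
    move=> s /andP [H1 H2]; case: (ltngtP s t.+1) => [Hst||->]; [apply: Hrun; lia|lia|].
    by rewrite E /= /upd_loc eqxx; eexists.
  + apply: inv_keep (IH _ _ _ Hpt Hl') _ _; first by rewrite E /= /upd_loc; case: eqP.
    by rewrite Hh.
- case: eqP Hl' => [Epq|Hne] Hl'.
  + subst q; case: Hl' => <- <-.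
    have [ti [Hti [Hli [Hhi [Hev [Hrun Hs]]]]]] := IH _ _ _ Hpt Hl.
    exists ti; split; first lia. do 2 (split => //); split.
      move=> s /andP [H1 H2]; case: (ltngtP s t) => [Hst||->]; [apply: Hev; lia|lia|by rewrite Hh].
    split.
      move=> s /andP [H1 H2]; case: (ltngtP s t.+1) => [Hst||->]; [apply: Hrun; lia|lia|].
      by rewrite E /= /upd_loc eqxx; eexists.
    have Hm : mem t.+1 p k = g (mem t p k) by rewrite E /= /upd_mem eqxx rk_eqb_refl.
    by have [_ Hs2] := Hs t (leqnn _) Hm.
  + apply: inv_keep (IH _ _ _ Hpt Hl') _ _; first by rewrite E /= /upd_loc; case: eqP.
    by rewrite Hh.
- case: eqP Hl' => [Epq|Hne] Hl' //.
  apply: inv_keep (IH _ _ _ Hpt Hl') _ _; first by rewrite E /= /upd_loc; case: eqP.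
  rewrite Hh /=; apply/eqP => Eq; by apply: Hne.
- case: eqP Hl' => [Epq|Hne] Hl'.
  + subst q; case: Hl' => <- <-.
    have [ti [Hti [Hli [Hhi [Hev [Hrun Hs]]]]]] := IH _ _ _ Hpt Hl.
    exists ti; split; first lia. do 2 (split => //); split.
      move=> s /andP [H1 H2]; case: (ltngtP s t) => [Hst||->]; [apply: Hev; lia|lia|by rewrite Hh].
    split.
      move=> s /andP [H1 H2]; case: (ltngtP s t.+1) => [Hst||->]; [apply: Hrun; lia|lia|].
      by rewrite E /= /upd_loc eqxx; eexists.
    apply: safe_deliver; [right; by exists v | lia].
  + apply: inv_keep (IH _ _ _ Hpt Hl') _ _; first by rewrite E /= /upd_loc; case: eqP.
    by rewrite Hh.
- case: eqP Hl' => [Epq|Hne] Hl' //.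
  apply: inv_keep (IH _ _ _ Hpt Hl') _ _; first by rewrite E /= /upd_loc; case: eqP.
  rewrite Hh /=; apply/eqP => Eq; by apply: Hne.
- apply: inv_keep (IH _ _ _ Hpt Hl') _ _; first by rewrite E.
  by rewrite Hh.
- apply: inv_keep (IH _ _ _ Hpt Hl') _ _; first by rewrite E.
  by rewrite Hh.
Qed.

End Inv.

Section Mem.
Variables (n f : nat) (V : eqType).
Local Notation proc := 'I_n.
Local Notation msg := (Defs.msg n V).
Local Notation prog := (Defs.prog n V).
Local Notation MPair := (@Defs.MPair n V).
Local Notation PRet := (@Defs.PRet n V).
Local Notation Idle := (@Defs.Idle n V).
Local Notation LStep := (@Defs.LStep n V).
Local Notation RAck := (@Defs.RAck V).
Local Notation OBcast := (@Defs.OBcast n V).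
Local Notation ODeliver := (@Defs.ODeliver n V).
Local Notation LCorrupt := (@Defs.LCorrupt n V).
Local Notation deliver_prog := (@Defs.deliver_prog n f V).
Local Notation cert_val := (@Defs.cert_val n f V).
Local Notation find_cert := (@Defs.find_cert n f V).
Local Notation valid_cert := (@Defs.valid_cert n f V).
Local Notation init_prog := (@Defs.init_prog n f V).
Local Notation refresh := (@Defs.refresh n f V).
Local Notation refresh_one := (@Defs.refresh_one n f V).
Local Notation exec_step := (@Defs.exec_step n f V).
Local Notation hist := (@Defs.hist n f V).
Local Notation is_execution := (@Defs.is_execution n f V).

Local Notation Running := (@Defs.Running n V).
Local Notation config := (Defs.config n V).
Local Notation label := (Defs.label n V).
Local Notation op := (Defs.op n V).

Variables (c : nat -> config) (l : nat -> label).
Hypothesis Hexec : is_execution c l.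
Hypothesis Hunf : unforgeable c l.

Local Notation mem t := (cmem (c t)).
Local Notation loc t := (cloc (c t)).
Local Notation corr t := (ccorr (c t)).
Local Notation H := (hist c l).
Local Notation Safe := (@Safe n f V c l).
Local Notation WriteOK := (@WriteOK n V c l).
Local Notation OwnOK := (@OwnOK n V c l).
Local Notation ReadyCond := (@ReadyCond n V c).
Local Notation SigOK := (@SigOK n V c l).
Local Notation Appeared := (@Appeared n V c).

Lemma honest_write t p o k g pr :
  l t = LStep p -> p \notin corr t -> loc t p = Running o (PWrite k g pr) ->
  exists ti, l ti = LInvoke p o /\ WriteOK p o ti t k (mem t p k) (g (mem t p k)).
Proof.
move=> El Hp Hl; have [ti [_ [Hli [_ [_ [_ Hs]]]]]] := Inv_all Hexec Hp Hl.
exists ti; split => //.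
have Hm : mem t.+1 p k = g (mem t p k).
  case: (step_inv Hexec t) => [q o' El' Hq Hl' E Hh|q o' q0 k0 cont El' Hq Hl' E Hh|q o' k' g' pr' El' Hq Hl' E Hh
  |q ts v w El' Hq Hl' E Hh|q ts v El' Hq Hl' E Hh|q j ts r El' Hq Hl' E Hh|q El' Hq Hc E Hh|q k' x El' Hq E Hh];
  rewrite El in El' => //; case: El' => Eq; subst q; rewrite Hl' in Hl => //.
  case: Hl => Eo Ek Eg Epr; subst; by rewrite E /= /upd_mem eqxx rk_eqb_refl.
by have [HW _] := Hs t (leqnn _) Hm.
Qed.

Lemma rk_eqb_eq a b : rk_eqb a b -> a = b.
Proof. by case: a; case: b. Qed.

Lemma mem_step t q k :
  mem t.+1 q k = mem t q k \/
  (exists o g pr ti, l t = LStep q /\ q \notin corr t /\ loc t q = Running o (PWrite k g pr) /\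
     mem t.+1 q k = g (mem t q k) /\ l ti = LInvoke q o /\ WriteOK q o ti t k (mem t q k) (g (mem t q k))) \/
  (exists x, l t = LByz q k x /\ q \in corr t /\ mem t.+1 q k = x).
Proof.
case: (step_inv Hexec t) => [p o' El Hp Hl E Hh|p o' q0 k0 cont El Hp Hl E Hh|p o' k' g pr El Hp Hl E Hh
  |p ts v w El Hp Hl E Hh|p ts v El Hp Hl E Hh|p j ts r El Hp Hl E Hh|p El Hp Hc E Hh|p k' x El Hp E Hh];
  rewrite E /=; try by left.
- rewrite /upd_mem; case: (eqVneq q p) => [Eq|Hne] /=; last by left.
  subst p; case Ek: (rk_eqb k' k); last by left.
  have Ekk : k' = k := rk_eqb_eq Ek.
  subst k'; right; left; have [ti [Hli HW]] := honest_write El Hp Hl.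
  exists o', g, pr, ti; do 4 (split => //); by rewrite /upd_mem eqxx rk_eqb_refl.
- rewrite /upd_mem; case: (eqVneq q p) => [Eq|Hne] /=; last by left.
  subst p; case Ek: (rk_eqb k' k); last by left.
  have Ekk : k' = k := rk_eqb_eq Ek.
  subst k'; right; right; exists x; split => //.
Qed.

Definition correct' (q : proc) := forall t, q \notin corr t.

Lemma growth_step t q k z : q \notin corr t.+1 -> k <> RSend ->
  List.In z (mem t q k) -> List.In z (mem t.+1 q k).
Proof.
move=> Hq Hk Hz; case: (mem_step t q k) => [->//|[[o [g [pr [ti [_ [_ [_ [-> [_ HW]]]]]]]]]|[x [_ [Hqc _]]]]].
- case: HW => [[Hk' _]//|[_ [x [-> _]]]]; exact: In_add_old.
- by move: Hq; have := subsetP (corr_step Hexec t) q Hqc => ->.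
Qed.

Lemma growth t t' q k z : correct c q -> k <> RSend -> t <= t' ->
  List.In z (mem t q k) -> List.In z (mem t' q k).
Proof.
move=> Hq Hk /subnK <-; elim: (t' - t) => [|d IH] //= Hz.
rewrite addSn; apply: growth_step => //; last exact: IH.
Qed.

Lemma ReadyCond_mono q m t t' : t <= t' -> ReadyCond q m t -> ReadyCond q m t'.
Proof.
move=> Ht [j [ts [v [te [Em [Hte [Hin Hk]]]]]]]; exists j, ts, v, te; split => //; split; first lia; split => //.
move=> k; have [tk [Htk Hn]] := Hk k; exists tk; split => //; lia.
Qed.

Lemma OwnOK_mono q w t t' : t <= t' -> OwnOK q w t -> OwnOK q w t'.
Proof.
case: w => //=.
- move=> ts v Ht [t0 [Ht0 El]]; exists t0; split => //; lia.
- move=> m Ht; exact: ReadyCond_mono.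
Qed.

Definition Good t (z : msg) := forall q w, correct c q -> subterm (MSig q w) z -> OwnOK q w t.

Lemma Good_mono t t' z : t <= t' -> Good t z -> Good t' z.
Proof. move=> Ht Hg q w Hq Hs; exact: OwnOK_mono Ht (Hg q w Hq Hs). Qed.

Lemma Good_all t q k z : List.In z (mem t q k) -> Good t z.
Proof.
suff: forall t0, t0 <= t -> forall q k z, List.In z (mem t0 q k) -> Good t0 z.
  by move=> /(_ t (leqnn _)); apply.
elim: t => [|t IH] t0 Ht0 q0 k0 z0.
  have -> : t0 = 0 by lia. by case: Hexec => -> _.
case: (ltngtP t0 t.+1) => [Hlt||->]; [by apply: IH; lia| lia|].
have Happ : forall q' w, Appeared t (MSig q' w) -> correct c q' -> OwnOK q' w t.+1.
  move=> q' w [t1 [q1 [k1 [z1 [Ht1 [Hz1 Hs1]]]]]] Hq'.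
  apply: OwnOK_mono (_ : t1 <= t.+1) _; first lia.
  exact: (IH t1 Ht1 q1 k1 z1 Hz1 q' w Hq' Hs1).
move=> Hz; case: (mem_step t q0 k0) => [Hm|[[o [g [pr [ti [_ [_ [_ [Hm [Hli HW]]]]]]]]]|[x [El [Hqc Hm]]]]]; rewrite Hm in Hz.
- apply: Good_mono (IH t (leqnn _) _ _ _ Hz); lia.
- case: HW => [[_ [ts [v [Eo [Ey [Hti Hli']]]]]]|[_ [x [Ey Hsig]]]]; rewrite Ey in Hz.
  + case: Hz => [<-|[]] q' w Hq' Hs.
    case: (subterm_sig_inv Hs) => [[-> ->]|Hs']; last by case: (subterm_pair_inv Hs').
    exists ti; split; first lia. by rewrite Hli' Eo.
  + case/In_add: Hz => [->|Hz] q' w Hq' Hs.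
    * case: (Hsig q' w Hs) => [[-> Hown]|Hap]; last exact: Happ.
      apply: OwnOK_mono Hown; lia.
    * apply: (Good_mono _ (IH t (leqnn _) _ _ _ Hz)) => //; lia.
- move=> q' w Hq' Hs; apply: Happ => //.
  exact: (Hunf El Hz Hs (Hq' t)).
Qed.

End Mem.

Lemma has_In (T : Type) (P : pred T) (s : seq T) y : List.In y s -> P y -> has P s.
Proof. elim: s => [|x s IH] //= [<- ->|/IH H /H ->] //; by rewrite orbT. Qed.

Lemma has_In_ex (T : Type) (P : pred T) (s : seq T) : has P s -> exists y, List.In y s /\ P y.
Proof.
elim: s => [|x s IH] //= /orP [Hx|/IH [y [Hy Py]]]; [by exists x; split; [left|] | by exists y; split; [right|]].
Qed.

Lemma mem_pmap_In (T : Type) (U : eqType) (F : T -> option U) (s : seq T) r :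
  r \in pmap F s -> exists y, List.In y s /\ F y = Some r.
Proof.
elim: s => [|x s IH] //=; case E: (F x) => [u|] /=; last by move/IH => [y [Hy Fy]]; exists y; split; [right|].
rewrite inE => /orP [/eqP ->|/IH [y [Hy Fy]]]; [by exists x; split; [left|] | by exists y; split; [right|]].
Qed.

Section Safety.
Variables (n f : nat) (V : eqType).
Local Notation proc := 'I_n.
Local Notation msg := (Defs.msg n V).
Local Notation prog := (Defs.prog n V).
Local Notation MPair := (@Defs.MPair n V).
Local Notation PRet := (@Defs.PRet n V).
Local Notation Idle := (@Defs.Idle n V).
Local Notation LStep := (@Defs.LStep n V).
Local Notation RAck := (@Defs.RAck V).
Local Notation OBcast := (@Defs.OBcast n V).
Local Notation ODeliver := (@Defs.ODeliver n V).
Local Notation LCorrupt := (@Defs.LCorrupt n V).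
Local Notation deliver_prog := (@Defs.deliver_prog n f V).
Local Notation cert_val := (@Defs.cert_val n f V).
Local Notation find_cert := (@Defs.find_cert n f V).
Local Notation valid_cert := (@Defs.valid_cert n f V).
Local Notation init_prog := (@Defs.init_prog n f V).
Local Notation refresh := (@Defs.refresh n f V).
Local Notation refresh_one := (@Defs.refresh_one n f V).
Local Notation exec_step := (@Defs.exec_step n f V).
Local Notation hist := (@Defs.hist n f V).
Local Notation is_execution := (@Defs.is_execution n f V).

Local Notation Running := (@Defs.Running n V).
Local Notation config := (Defs.config n V).
Local Notation label := (Defs.label n V).
Local Notation op := (Defs.op n V).

Variables (c : nat -> config) (l : nat -> label).
Hypothesis Hexec : is_execution c l.
Hypothesis Hunf : unforgeable c l.
Hypothesis HA2 : A2 c l.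

Local Notation mem t := (cmem (c t)).
Local Notation loc t := (cloc (c t)).
Local Notation corr t := (ccorr (c t)).
Local Notation H := (hist c l).
Local Notation OwnOK := (@OwnOK n V c l).
Local Notation ReadyCond := (@ReadyCond n V c).
Local Notation Good := (@Good n V c l).

Lemma not_correct (q : proc) : ~ correct c q -> exists t, q \in corr t.
Proof.
move=> Hq; apply: NNPP => Hn; apply: Hq => t; apply/negP => Ht; apply: Hn; by exists t.
Qed.

Lemma corrupt_bound : exists T, forall q : proc, ~ correct c q -> q \in corr T.
Proof.
suff: forall s : seq proc, exists T, forall q, q \in s -> ~ correct c q -> q \in corr T.
  move=> /(_ (enum proc)) [T HT]; exists T => q; apply: HT; by rewrite mem_enum.
elim=> [|q0 s [T HT]]; first by exists 0.
case: (classic (correct c q0)) => Hq0.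
  exists T => q; rewrite inE => /orP [/eqP -> //|]; exact: HT.
have [t0 Ht0] := not_correct Hq0.
exists (maxn T t0) => q; rewrite inE => /orP [/eqP ->|Hq] Hnc.
  apply: (subsetP (corr_mono Hexec (leq_maxr T t0))); exact: Ht0.
apply: (subsetP (corr_mono Hexec (leq_maxl T t0))); exact: HT.
Qed.

Lemma exists_correct (s : seq proc) : uniq s -> f < size s -> exists q, q \in s /\ correct c q.
Proof.
move=> Hu Hs; apply: NNPP => Hn.
have [T HT] := corrupt_bound.
have Hsub : {subset s <= enum (corr T)}.
  move=> q Hq; rewrite mem_enum; apply: HT => Hc; apply: Hn; by exists q.
have := uniq_leq_size Hu Hsub; rewrite -cardE => Hle.
have H1 := leq_trans Hle (card_corr Hexec T); move: Hs; by rewrite ltnNge H1.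
Qed.

Lemma cert_valP j ts (x : msg) v :
  cert_val j ts x = Some v -> exists sigma, x = MDel (MSig j (MPair ts v)) sigma /\
     valid_cert (MSig j (MPair ts v)) sigma.
Proof.
case: x => // m s; case: m => // j' m; case: m => // ts' v' /=.
case: ifP => // /and3P [/eqP -> /eqP -> Hv] [<-]; by exists s.
Qed.

Lemma cert_ready j ts x v t q k :
  cert_val j ts x = Some v -> List.In x (mem t q k) ->
  exists r, correct c r /\ ReadyCond r (MSig j (MPair ts v)) t.
Proof.
move=> /cert_valP [sigma [-> /and3P [Hall Hu Hsz]]] Hin.
set m := MSig j (MPair ts v).
have Hsize : size (pmap (ready_signer m) sigma) = size sigma.
  rewrite size_pmap; apply/eqP; rewrite -all_count; apply: sub_all Hall => y /=.
  by case: (ready_signer m y).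
have [r [Hr Hcr]] : exists r, r \in pmap (ready_signer m) sigma /\ correct c r.
  apply: exists_correct => //; lia.
exists r; split => //.
have [y [Hy Fy]] := mem_pmap_In Hr.
have Ey : y = MSig r (MReady m).
  move: Fy; case: y {Hy} => // r' y; case: y => // m' /=; case: ifP => // /msg_eqbP -> [->] //.
have Hg := Good_all Hexec Hunf Hin.
have Hs : subterm (MSig r (MReady m)) (MDel m sigma) by apply: st_del2 Hy _; rewrite Ey; exact: st_refl.
exact: (Hg r (MReady m) Hcr Hs).
Qed.

Lemma ready_unique r1 r2 j ts v1 v2 t1 t2 :
  correct c r1 -> correct c r2 ->
  ReadyCond r1 (MSig j (MPair ts v1)) t1 -> ReadyCond r2 (MSig j (MPair ts v2)) t2 -> v1 = v2.
Proof.
move=> Hc1 Hc2 H1 H2; apply: NNPP => Hne.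
have key : forall r1 r2 v1 v2 t1 t2, correct c r1 -> v1 <> v2 ->
    ReadyCond r1 (MSig j (MPair ts v1)) t1 -> ReadyCond r2 (MSig j (MPair ts v2)) t2 ->
    forall te1 te2, te1 <= te2 ->
    List.In (MSig r1 (MSig j (MPair ts v1))) (mem te1 r1 REcho) ->
    (forall k, exists tk, te2 <= tk <= t2 /\ ~~ has (conf_entry k j ts v2) (mem tk k REcho)) -> False.
  move=> a1 a2 w1 w2 s1 s2 Hca Hw _ _ te1 te2 Hte Hin Hk.
  have [tk [/andP [Htk1 _] Hn]] := Hk a1.
  have Hin' := growth Hexec Hca (k := REcho) (t' := tk) (fun E => ltac:(discriminate E)) (_ : te1 <= tk) Hin.
  apply: (negP Hn); apply: has_In (Hin' _) _; first lia.
  rewrite /= !eqxx /=; apply/eqP => E; by apply: Hw.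
move: (H1) (H2) => [j1 [ts1 [w1 [te1 [E1 [Hte1 [Hin1 Hk1]]]]]]] [j2 [ts2 [w2 [te2 [E2 [Hte2 [Hin2 Hk2]]]]]]].
case: E1 => ? ? ?; case: E2 => ? ? ?; subst.
case: (leqP te1 te2) => Hte.
- exact: (key r1 r2 w1 w2 t1 t2 Hc1 Hne H1 H2 te1 te2 Hte Hin1 Hk2).
- have Hne' : w2 <> w1 by move=> E; apply: Hne.
  exact: (key r2 r1 w2 w1 t2 t1 Hc2 Hne' H2 H1 te2 te1 (ltnW Hte) Hin2 Hk1).
Qed.

Lemma cert_unique j ts x1 x2 v1 v2 t1 t2 q1 q2 k1 k2 :
  cert_val j ts x1 = Some v1 -> List.In x1 (mem t1 q1 k1) ->
  cert_val j ts x2 = Some v2 -> List.In x2 (mem t2 q2 k2) -> v1 = v2.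
Proof.
move=> C1 I1 C2 I2.
have [r1 [Hr1 R1]] := cert_ready C1 I1; have [r2 [Hr2 R2]] := cert_ready C2 I2.
exact: ready_unique Hr1 Hr2 R1 R2.
Qed.

Lemma cert_inv j ts x v t q k :
  cert_val j ts x = Some v -> List.In x (mem t q k) -> correct c j ->
  exists t0, t0 < t /\ l t0 = LInvoke j (OBcast ts v).
Proof.
move=> Hc Hin Hj; have Hg := Good_all Hexec Hunf Hin.
have [sigma [Ex _]] := cert_valP Hc.
have Hs : subterm (MSig j (MPair ts v)) x by rewrite Ex; apply: st_del1; exact: st_refl.
exact: (Hg j (MPair ts v) Hj Hs).
Qed.

Lemma conf_entryP k j ts v (y : msg) :
  conf_entry k j ts v y -> exists w, y = MSig k (MSig j (MPair ts w)) /\ w != v.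
Proof.
case: y => // k' y; case: y => // j' y; case: y => // ts' w /=.
case/and4P => /eqP -> /eqP -> /eqP -> Hw; by exists w.
Qed.

Lemma no_conflict j ts v t0 k t q :
  correct c j -> l t0 = LInvoke j (OBcast ts v) ->
  ~~ has (conf_entry k j ts v) (mem t q REcho).
Proof.
move=> Hj Hl; apply/negP => /has_In_ex [y [Hy /conf_entryP [w [Ey Hw]]]].
have Hg := Good_all Hexec Hunf Hy.
have Hs : subterm (MSig j (MPair ts w)) y by rewrite Ey; apply: st_sig; exact: st_refl.
have [t1 [_ Hl1]] := Hg j (MPair ts w) Hj Hs.
have E := HA2 Hj Hl1 Hl; subst t1; rewrite Hl in Hl1; case: Hl1 => E.
by rewrite E eqxx in Hw.
Qed.

End Safety.

Section Steps.
Variables (n f : nat) (V : eqType).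
Local Notation proc := 'I_n.
Local Notation msg := (Defs.msg n V).
Local Notation prog := (Defs.prog n V).
Local Notation MPair := (@Defs.MPair n V).
Local Notation PRet := (@Defs.PRet n V).
Local Notation Idle := (@Defs.Idle n V).
Local Notation LStep := (@Defs.LStep n V).
Local Notation RAck := (@Defs.RAck V).
Local Notation OBcast := (@Defs.OBcast n V).
Local Notation ODeliver := (@Defs.ODeliver n V).
Local Notation LCorrupt := (@Defs.LCorrupt n V).
Local Notation deliver_prog := (@Defs.deliver_prog n f V).
Local Notation cert_val := (@Defs.cert_val n f V).
Local Notation find_cert := (@Defs.find_cert n f V).
Local Notation valid_cert := (@Defs.valid_cert n f V).
Local Notation init_prog := (@Defs.init_prog n f V).
Local Notation refresh := (@Defs.refresh n f V).
Local Notation refresh_one := (@Defs.refresh_one n f V).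
Local Notation exec_step := (@Defs.exec_step n f V).
Local Notation hist := (@Defs.hist n f V).
Local Notation is_execution := (@Defs.is_execution n f V).

Local Notation Running := (@Defs.Running n V).
Local Notation config := (Defs.config n V).
Local Notation label := (Defs.label n V).
Local Notation op := (Defs.op n V).

Variables (c : nat -> config) (l : nat -> label).
Hypothesis Hexec : is_execution c l.

Local Notation mem t := (cmem (c t)).
Local Notation loc t := (cloc (c t)).
Local Notation corr t := (ccorr (c t)).
Local Notation H := (hist c l).


Lemma step_read t p o q k cont : l t = LStep p -> loc t p = Running o (PRead q k cont) ->
  loc t.+1 p = Running o (cont (mem t q k)).
Proof.
move=> El Hl; case: (step_inv Hexec t) => [p' o' El' Hp' Hl' E Hh|p' o' q' k' cont' El' Hp' Hl' E Hh|p' o' k' g' pr' El' Hp' Hl' E Hh|p' ts' v' w' El' Hp' Hl' E Hh|p' ts' v' El' Hp' Hl' E Hh|p' j' ts' r' El' Hp' Hl' E Hh|p' El' Hp' Hc' E Hh|p' k' x' El' Hp' E Hh]; rewrite El in El'; try discriminate;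
  case: El' => Eq; subst p'; rewrite Hl in Hl'; try discriminate.
by case: Hl' => -> -> -> ->; rewrite E /= /upd_loc eqxx.
Qed.

Lemma step_write t p o k g pr : l t = LStep p -> loc t p = Running o (PWrite k g pr) ->
  loc t.+1 p = Running o pr /\ mem t.+1 p k = g (mem t p k).
Proof.
move=> El Hl; case: (step_inv Hexec t) => [p' o' El' Hp' Hl' E Hh|p' o' q' k' cont' El' Hp' Hl' E Hh|p' o' k' g' pr' El' Hp' Hl' E Hh|p' ts' v' w' El' Hp' Hl' E Hh|p' ts' v' El' Hp' Hl' E Hh|p' j' ts' r' El' Hp' Hl' E Hh|p' El' Hp' Hc' E Hh|p' k' x' El' Hp' E Hh]; rewrite El in El'; try discriminate;
  case: El' => Eq; subst p'; rewrite Hl in Hl'; try discriminate.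
case: Hl' => -> -> -> ->; rewrite E /= /upd_loc /upd_mem eqxx rk_eqb_refl; by [].
Qed.

Lemma step_retBN t p ts v : l t = LStep p -> loc t p = Running (OBcast ts v) (PRet None) ->
  loc t.+1 p = Running (OBcast ts v) (deliver_prog p p ts).
Proof.
move=> El Hl; case: (step_inv Hexec t) => [p' o' El' Hp' Hl' E Hh|p' o' q' k' cont' El' Hp' Hl' E Hh|p' o' k' g' pr' El' Hp' Hl' E Hh|p' ts' v' w' El' Hp' Hl' E Hh|p' ts' v' El' Hp' Hl' E Hh|p' j' ts' r' El' Hp' Hl' E Hh|p' El' Hp' Hc' E Hh|p' k' x' El' Hp' E Hh]; rewrite El in El'; try discriminate;
  case: El' => Eq; subst p'; rewrite Hl in Hl'; try discriminate.
by case: Hl' => -> -> ; rewrite E /= /upd_loc eqxx.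
Qed.

Lemma step_retBS t p ts v w : l t = LStep p -> loc t p = Running (OBcast ts v) (PRet (Some w)) ->
  H t = Some (ERes p RAck) /\ loc t.+1 p = Idle.
Proof.
move=> El Hl; case: (step_inv Hexec t) => [p' o' El' Hp' Hl' E Hh|p' o' q' k' cont' El' Hp' Hl' E Hh|p' o' k' g' pr' El' Hp' Hl' E Hh|p' ts' v' w' El' Hp' Hl' E Hh|p' ts' v' El' Hp' Hl' E Hh|p' j' ts' r' El' Hp' Hl' E Hh|p' El' Hp' Hc' E Hh|p' k' x' El' Hp' E Hh]; rewrite El in El'; try discriminate;
  case: El' => Eq; subst p'; rewrite Hl in Hl'; try discriminate.
by rewrite Hh E /= /upd_loc eqxx.
Qed.

Lemma step_retD t p j ts r : l t = LStep p -> loc t p = Running (ODeliver j ts) (PRet r) ->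
  H t = Some (ERes p (RVal r)) /\ loc t.+1 p = Idle.
Proof.
move=> El Hl; case: (step_inv Hexec t) => [p' o' El' Hp' Hl' E Hh|p' o' q' k' cont' El' Hp' Hl' E Hh|p' o' k' g' pr' El' Hp' Hl' E Hh|p' ts' v' w' El' Hp' Hl' E Hh|p' ts' v' El' Hp' Hl' E Hh|p' j' ts' r' El' Hp' Hl' E Hh|p' El' Hp' Hc' E Hh|p' k' x' El' Hp' E Hh]; rewrite El in El'; try discriminate;
  case: El' => Eq; subst p'; rewrite Hl in Hl'; try discriminate.
case: Hl' => _ _ ->; by rewrite Hh E /= /upd_loc eqxx.
Qed.

Lemma step_invoke t p o : l t = LInvoke p o ->
  loc t.+1 p = Running o (init_prog p o) /\ H t = Some (EInv p o) /\ loc t p = Idle.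
Proof.
move=> El; case: (step_inv Hexec t) => [p' o' El' Hp' Hl' E Hh|p' o' q' k' cont' El' Hp' Hl' E Hh|p' o' k' g' pr' El' Hp' Hl' E Hh|p' ts' v' w' El' Hp' Hl' E Hh|p' ts' v' El' Hp' Hl' E Hh|p' j' ts' r' El' Hp' Hl' E Hh|p' El' Hp' Hc' E Hh|p' k' x' El' Hp' E Hh]; rewrite El in El'; try discriminate;
  case: El' => Eq Eo; subst p' o'.
by rewrite Hh E /= /upd_loc eqxx.
Qed.

Lemma running_keep t p o pr : l t <> LStep p -> loc t p = Running o pr -> loc t.+1 p = Running o pr.
Proof.
move=> Hs Hl; rewrite (loc_other Hexec) //.
move=> o' El; have [_ [_ Hi]] := step_invoke El; by rewrite Hl in Hi.
Qed.

End Steps.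

Section Live.
Variables (n f : nat) (V : eqType).
Local Notation proc := 'I_n.
Local Notation msg := (Defs.msg n V).
Local Notation prog := (Defs.prog n V).
Local Notation MPair := (@Defs.MPair n V).
Local Notation PRet := (@Defs.PRet n V).
Local Notation Idle := (@Defs.Idle n V).
Local Notation LStep := (@Defs.LStep n V).
Local Notation RAck := (@Defs.RAck V).
Local Notation OBcast := (@Defs.OBcast n V).
Local Notation ODeliver := (@Defs.ODeliver n V).
Local Notation LCorrupt := (@Defs.LCorrupt n V).
Local Notation deliver_prog := (@Defs.deliver_prog n f V).
Local Notation cert_val := (@Defs.cert_val n f V).
Local Notation find_cert := (@Defs.find_cert n f V).
Local Notation valid_cert := (@Defs.valid_cert n f V).
Local Notation init_prog := (@Defs.init_prog n f V).
Local Notation refresh := (@Defs.refresh n f V).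
Local Notation refresh_one := (@Defs.refresh_one n f V).
Local Notation exec_step := (@Defs.exec_step n f V).
Local Notation hist := (@Defs.hist n f V).
Local Notation is_execution := (@Defs.is_execution n f V).

Local Notation Running := (@Defs.Running n V).
Local Notation config := (Defs.config n V).
Local Notation label := (Defs.label n V).
Local Notation op := (Defs.op n V).

Variables (c : nat -> config) (l : nat -> label).
Hypothesis Hexec : is_execution c l.
Hypothesis Hunf : unforgeable c l.
Hypothesis Hfair : fair c l.
Hypothesis HA1 : A1 c l.
Hypothesis HA2 : A2 c l.

Local Notation mem t := (cmem (c t)).
Local Notation loc t := (cloc (c t)).
Local Notation corr t := (ccorr (c t)).
Local Notation H := (hist c l).

Lemma next_step p o pr t : correct c p -> loc t p = Running o pr ->
  exists t', t <= t' /\ l t' = LStep p /\ loc t' p = Running o pr.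
Proof.
move=> Hp Hl; have [t1 [Ht1 El1]] := Hfair Hp Hl.
suff: forall d t, loc t p = Running o pr -> t + d = t1 ->
  exists t', t <= t' /\ l t' = LStep p /\ loc t' p = Running o pr.
  move=> /(_ (t1 - t) t Hl); apply; lia.
elim=> [|d IH] t' Hl' Ed.
  exists t'; rewrite addn0 in Ed; subst; split => //.
case: (classic (l t' = LStep p)) => Hs; first by exists t'.
have Ed' : t'.+1 + d = t1 by lia.
have [t'' [Ht'' Hr]] := IH t'.+1 (running_keep Hexec Hs Hl') Ed'.
exists t''; split => //; lia.
Qed.

Lemma ev_run (A : proc -> rkind -> seq msg -> Prop) (Q : prog -> Prop) p o pr t :
  correct c p -> loc t p = Running o pr -> EvR A Q pr ->
  (forall s q k, t <= s -> A q k (mem s q k)) ->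
  exists t' pr', t <= t' /\ loc t' p = Running o pr' /\ Q pr'.
Proof.
move=> Hp Hl Hev; elim: Hev t Hl => {pr} [pr HQ|q k cont _ IH|k g pr _ IH] t Hl HA.
- by exists t, pr.
- have [t1 [Ht1 [El Hl1]]] := next_step Hp Hl.
  have Hl2 := step_read Hexec El Hl1.
  have [t' [pr' [Ht' Hr]]] := IH _ (HA t1 q k Ht1) t1.+1 Hl2 (fun s q k Hs => HA s q k (ltac:(lia))).
  exists t', pr'; split => //; lia.
- have [t1 [Ht1 [El Hl1]]] := next_step Hp Hl.
  have [Hl2 _] := step_write Hexec El Hl1.
  have [t' [pr' [Ht' Hr]]] := IH t1.+1 Hl2 (fun s q k Hs => HA s q k (ltac:(lia))).
  exists t', pr'; split => //; lia.
Qed.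

End Live.

Section Live2.
Variables (n f : nat) (V : eqType).
Local Notation proc := 'I_n.
Local Notation msg := (Defs.msg n V).
Local Notation prog := (Defs.prog n V).
Local Notation MPair := (@Defs.MPair n V).
Local Notation PRet := (@Defs.PRet n V).
Local Notation Idle := (@Defs.Idle n V).
Local Notation LStep := (@Defs.LStep n V).
Local Notation RAck := (@Defs.RAck V).
Local Notation OBcast := (@Defs.OBcast n V).
Local Notation ODeliver := (@Defs.ODeliver n V).
Local Notation LCorrupt := (@Defs.LCorrupt n V).
Local Notation deliver_prog := (@Defs.deliver_prog n f V).
Local Notation cert_val := (@Defs.cert_val n f V).
Local Notation find_cert := (@Defs.find_cert n f V).
Local Notation valid_cert := (@Defs.valid_cert n f V).
Local Notation init_prog := (@Defs.init_prog n f V).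
Local Notation refresh := (@Defs.refresh n f V).
Local Notation refresh_one := (@Defs.refresh_one n f V).
Local Notation exec_step := (@Defs.exec_step n f V).
Local Notation hist := (@Defs.hist n f V).
Local Notation is_execution := (@Defs.is_execution n f V).

Local Notation Running := (@Defs.Running n V).
Local Notation config := (Defs.config n V).
Local Notation label := (Defs.label n V).
Local Notation op := (Defs.op n V).

Variables (c : nat -> config) (l : nat -> label).
Hypothesis Hexec : is_execution c l.
Hypothesis Hunf : unforgeable c l.
Hypothesis Hfair : fair c l.
Hypothesis HA1 : A1 c l.
Hypothesis HA2 : A2 c l.

Local Notation mem t := (cmem (c t)).
Local Notation loc t := (cloc (c t)).
Local Notation corr t := (ccorr (c t)).
Local Notation H := (hist c l).
Local Notation next_step := (next_step Hexec Hfair).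
Local Notation ev_run := (ev_run Hexec Hfair).

Definition ATrue : proc -> rkind -> seq msg -> Prop := fun _ _ _ => True.

Lemma reach_deliver p t : correct c p ->
  exists t' o j ts, t <= t' /\ loc t' p = Running o (deliver_prog p j ts).
Proof.
move=> Hp.
have Hidle : forall t, loc t p = Idle -> exists t' o j ts, t <= t' /\ loc t' p = Running o (deliver_prog p j ts).
  move=> t0 Hl0; have [t1 [o [Ht1 El1]]] := HA1 Hp Hl0.
  have [Hl1 _] := step_invoke Hexec El1.
  case: o El1 Hl1 => [ts v|j ts] El1 Hl1.
  - have [t2 [Ht2 [El2 Hl2]]] := next_step Hp Hl1.
    have [Hl3 _] := step_write Hexec El2 Hl2.
    exists t2.+1, (OBcast ts v), p, ts; split => //; lia.
  - exists t1.+1, (ODeliver j ts), j, ts; split => //; lia.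
case E: (loc t p) => [|o pr]; first exact: Hidle.
have [t2 [pr' [Ht2 [Hl2 [r Er]]]]] := ev_run (A := ATrue) Hp E (ev_ret _ pr) (fun _ _ _ _ => I).
subst pr'; have [t3 [Ht3 [El3 Hl3]]] := next_step Hp Hl2.
case: o E Hl2 Hl3 => [ts v|j ts] E Hl2 Hl3.
- case: r Hl2 Hl3 => [w|] Hl2 Hl3.
  + have [_ Hi] := step_retBS Hexec El3 Hl3.
    have [t' [o' [j' [ts' [Ht' Hl']]]]] := Hidle _ Hi; exists t', o', j', ts'; split => //; lia.
  + have Hl4 := step_retBN Hexec El3 Hl3; exists t3.+1, (OBcast ts v), p, ts; split => //; lia.
- have [_ Hi] := step_retD Hexec El3 Hl3.
  have [t' [o' [j' [ts' [Ht' Hl']]]]] := Hidle _ Hi; exists t', o', j', ts'; split => //; lia.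
Qed.

Lemma deliver_progE p j ts :
  deliver_prog p j ts = foldr (refresh_one p) (read_all_regs RDeliver (fun dl =>
    match find_cert dl j ts with
    | None => PRet None
    | Some (v, x) => PWrite RDeliver (add x) (PRet (Some v))
    end)) (enum proc).
Proof. by []. Qed.

Lemma reach_refresh p t i : correct c p ->
  exists t' o cont, t <= t' /\ loc t' p = Running o (refresh_one p i cont).
Proof.
move=> Hp; have [t1 [o [j [ts [Ht1 Hl1]]]]] := reach_deliver t Hp.
rewrite deliver_progE in Hl1.
have Hin : i \in enum proc by rewrite mem_enum.
have [t2 [pr [Ht2 [Hl2 [js Ejs]]]]] := ev_run (A := ATrue) Hp Hl1 (ev_foldr_at f ATrue p _ Hin) (fun _ _ _ _ => I).
subst pr; eexists t2, o, _; split; [lia|exact: Hl2].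
Qed.

Definition A0 (i : proc) ts (v : V) : proc -> rkind -> seq msg -> Prop :=
  fun q kd x => (q = i -> kd = RSend -> x = [:: MSig i (MPair ts v)]) /\
                (kd = REcho -> forall k', ~~ has (conf_entry k' i ts v) x).

Lemma ev_ready k i ts v cont :
  EvR (A0 i ts v) (fun pr => exists AR, pr = PWrite RReady (add (MSig k (MReady (MSig i (MPair ts v))))) AR)
    (refresh_one k i cont).
Proof.
rewrite /refresh_one; apply: ev_read => x [Hx _]; rewrite (Hx erefl erefl) send_content_mk /=.
apply: ev_write; rewrite /read_all_regs; apply: ev_read_all => ech Hech.
rewrite conflictingF; first by apply: ev_here; eexists.
move=> k'; have [H1 _] := Hech k'; have [_ H2] := H1 (mem_enum _ _); exact: H2 erefl k'.
Qed.

Lemma ready_eventually i ts v t0 t1 k :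
  correct c i -> l t0 = LInvoke i (OBcast ts v) ->
  (forall s, t1 <= s -> mem s i RSend = [:: MSig i (MPair ts v)]) -> correct c k ->
  exists Tk, forall s, Tk <= s -> List.In (MSig k (MReady (MSig i (MPair ts v)))) (mem s k RReady).
Proof.
move=> Hi Hl0 Hsend Hk.
have [t2 [o [cont [Ht2 Hl2]]]] := reach_refresh t1 i Hk.
have HA : forall s q kd, t2 <= s -> A0 i ts v q kd (mem s q kd).
  move=> s q kd Hs; split; first by move=> -> ->; apply: Hsend; lia.
  move=> -> k'; exact: (no_conflict Hexec Hunf HA2 k' s q Hi Hl0).
have [t3 [pr [Ht3 [Hl3 [AR EAR]]]]] := ev_run Hk Hl2 (ev_ready k i ts v cont) HA.
subst pr; have [t4 [Ht4 [El4 Hl4]]] := next_step Hk Hl3.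
have [_ Hm] := step_write Hexec El4 Hl4.
exists t4.+1 => s Hs; apply: (growth Hexec Hk (k := RReady) (t := t4.+1)) => //.
by rewrite Hm; exact: In_add_new.
Qed.

Lemma all_ready i ts v t0 t1 :
  correct c i -> l t0 = LInvoke i (OBcast ts v) ->
  (forall s, t1 <= s -> mem s i RSend = [:: MSig i (MPair ts v)]) ->
  exists T, forall k, correct c k -> forall s, T <= s ->
    List.In (MSig k (MReady (MSig i (MPair ts v)))) (mem s k RReady).
Proof.
move=> Hi Hl0 Hsend.
suff: forall ks : seq proc, exists T, forall k, k \in ks -> correct c k -> forall s, T <= s ->
    List.In (MSig k (MReady (MSig i (MPair ts v)))) (mem s k RReady).
  move=> /(_ (enum proc)) [T HT]; exists T => k; apply: HT; by rewrite mem_enum.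
elim=> [|k0 ks [T HT]]; first by exists 0.
case: (classic (correct c k0)) => Hk0.
  have [Tk HTk] := ready_eventually Hi Hl0 Hsend Hk0.
  exists (maxn T Tk) => k; rewrite inE => /orP [/eqP ->|Hk] Hc s Hs.
    apply: HTk; lia.
  apply: HT => //; lia.
exists T => k; rewrite inE => /orP [/eqP ->|Hk] //; exact: HT.
Qed.

End Live2.

Section Resil.
Variables (n f : nat) (V : eqType).
Local Notation proc := 'I_n.
Local Notation msg := (Defs.msg n V).
Local Notation prog := (Defs.prog n V).
Local Notation MPair := (@Defs.MPair n V).
Local Notation PRet := (@Defs.PRet n V).
Local Notation Idle := (@Defs.Idle n V).
Local Notation LStep := (@Defs.LStep n V).
Local Notation RAck := (@Defs.RAck V).
Local Notation OBcast := (@Defs.OBcast n V).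
Local Notation ODeliver := (@Defs.ODeliver n V).
Local Notation LCorrupt := (@Defs.LCorrupt n V).
Local Notation deliver_prog := (@Defs.deliver_prog n f V).
Local Notation cert_val := (@Defs.cert_val n f V).
Local Notation find_cert := (@Defs.find_cert n f V).
Local Notation valid_cert := (@Defs.valid_cert n f V).
Local Notation init_prog := (@Defs.init_prog n f V).
Local Notation refresh := (@Defs.refresh n f V).
Local Notation refresh_one := (@Defs.refresh_one n f V).
Local Notation exec_step := (@Defs.exec_step n f V).
Local Notation hist := (@Defs.hist n f V).
Local Notation is_execution := (@Defs.is_execution n f V).

Local Notation Running := (@Defs.Running n V).
Local Notation config := (Defs.config n V).
Local Notation label := (Defs.label n V).
Local Notation op := (Defs.op n V).

Variables (c : nat -> config) (l : nat -> label).
Hypothesis Hn : 2 * f < n.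
Hypothesis Hexec : is_execution c l.
Hypothesis Hunf : unforgeable c l.
Hypothesis Hfair : fair c l.
Hypothesis HA1 : A1 c l.
Hypothesis HA2 : A2 c l.

Local Notation mem t := (cmem (c t)).
Local Notation loc t := (cloc (c t)).
Local Notation corr t := (ccorr (c t)).
Local Notation H := (hist c l).
Local Notation next_step := (next_step Hexec Hfair).
Local Notation ev_run := (ev_run Hexec Hfair).

Lemma pmap_signers (m : msg) (S : seq proc) :
  pmap (ready_signer m) [seq MSig l0 (MReady m) | l0 <- S] = S.
Proof. elim: S => [|x S IH] //=; by rewrite msg_eqb_refl /= IH. Qed.

Lemma cert_valid p ts v (S : seq proc) : uniq S -> f < size S ->
  cert_val p ts (MDel (MSig p (MPair ts v)) [seq MSig l0 (MReady (MSig p (MPair ts v))) | l0 <- S]) = Some v.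
Proof.
move=> Hu Hs; rewrite /cert_val !eqxx /= /valid_cert pmap_signers Hu size_map Hs andbT.
set m := MSig p (MPair ts v).
have Hall : all (fun x => ready_signer m x != None) [seq MSig l0 (MReady m) | l0 <- S].
  rewrite all_map; apply/allP => x _ /=; by rewrite !eqxx.
by rewrite Hall.
Qed.

Lemma many_ready (P : pred proc) : (forall q, correct c q -> P q) ->
  f < size [seq q <- enum proc | P q].
Proof.
move=> HP; rewrite ltnNge; apply/negP => Hle.
have Hsz : size [seq q <- enum proc | P q] + size [seq q <- enum proc | predC P q] = n.
  by rewrite !size_filter count_predC size_enum_ord.
have [q [Hq Hc]] : exists q, q \in [seq q <- enum proc | predC P q] /\ correct c q.
  apply: (exists_correct Hexec); first by apply: filter_uniq; exact: enum_uniq.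
  lia.
move: Hq; rewrite mem_filter /= => /andP [HnP _]; by rewrite (HP q Hc) in HnP.
Qed.

Definition A1' (i : proc) ts (v : V) : proc -> rkind -> seq msg -> Prop :=
  fun q kd x => A0 i ts v q kd x /\
     (kd = RReady -> correct c q -> List.In (MSig q (MReady (MSig i (MPair ts v)))) x).

Lemma ev_cert p ts v cont :
  EvR (A1' p ts v) (fun pr => exists X, cert_val p ts X = Some v /\ pr = PWrite RDeliver (add X) cont)
    (refresh_one p p cont).
Proof.
rewrite /refresh_one; apply: ev_read => x [[Hx _] _]; rewrite (Hx erefl erefl) send_content_mk /=.
apply: ev_write; rewrite /read_all_regs; apply: ev_read_all => ech Hech.
rewrite conflictingF; last first.
  move=> k'; have [H1 _] := Hech k'; have [[_ H2] _] := H1 (mem_enum _ _); exact: H2 erefl k'.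
apply: ev_write; apply: ev_read_all => rd Hrd /=.
set S := [seq l0 <- enum proc | _].
have HS : f < size S.
  apply: many_ready => q Hq; rewrite /ready_ok; apply/has_eqbP.
  have [H1 _] := Hrd q; have [_ H2] := H1 (mem_enum _ _); exact: H2 erefl Hq.
rewrite HS; apply: ev_read_all => ech2 Hech2.
rewrite conflictingF; last first.
  move=> k'; have [H1 _] := Hech2 k'; have [[_ H2] _] := H1 (mem_enum _ _); exact: H2 erefl k'.
apply: ev_here; eexists; split; last reflexivity.
apply: cert_valid => //; apply: filter_uniq; exact: enum_uniq.
Qed.

Lemma find_cert_some (dl : proc -> seq msg) j ts x v k :
  List.In x (dl k) -> cert_val j ts x = Some v -> exists v' x', find_cert dl j ts = Some (v', x').
Proof.
move=> Hx Hc; case E: (find_cert dl j ts) => [[v' x']|]; first by exists v', x'.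
by rewrite (find_certN E Hx) in Hc.
Qed.

Lemma resilience : resilient f c l.
Proof.
move=> p Hp t o El.
have [Hl1 [Hh _]] := step_invoke Hexec El.
case: o El Hl1 Hh => [ts v|j ts] El Hl1 Hh; last first.
  have [t2 [pr [Ht2 [Hl2 [r Er]]]]] := ev_run (A := @ATrue n V) Hp Hl1 (ev_ret _ _) (fun _ _ _ _ => I).
  subst pr; have [t3 [Ht3 [El3 Hl3]]] := next_step Hp Hl2.
  have [Hh3 _] := step_retD Hexec El3 Hl3.
  exists t3, (RVal r); split => //; lia.
apply: NNPP => Hno.
have Claim1 : forall d, exists pr, loc (t.+1 + d) p = Running (OBcast ts v) pr.
  elim=> [|d [pr IH]]; first by rewrite addn0; eexists; exact: Hl1.
  rewrite addnS; case: (classic (l (t.+1 + d) = LStep p)) => Hs.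
  2: { exists pr. have := running_keep Hexec Hs IH. done. }
  case: pr IH => [[w|]|q k cont|k g pr] IH.
  - have [Hh' _] := step_retBS Hexec Hs IH; case: Hno; exists (t.+1 + d), RAck; split => //; lia.
  - have := step_retBN Hexec Hs IH; move=> H0; eexists; exact: H0.
  - have := step_read Hexec Hs IH; move=> H0; eexists; exact: H0.
  - have [H1 _] := step_write Hexec Hs IH; eexists; exact: H1.
have Claim1' : forall s, t < s -> exists pr, loc s p = Running (OBcast ts v) pr.
  move=> s Hs; have := Claim1 (s - t.+1); rewrite subnKC //.
have [t2 [Ht2 [El2 Hl2]]] := next_step Hp Hl1.
have [_ Hm2] := step_write Hexec El2 Hl2.
have Hsend : forall s, t2.+1 <= s -> mem s p RSend = [:: MSig p (MPair ts v)].
  move=> s /subnK <-; elim: (s - t2.+1) => [|d IH] //=; rewrite addSn.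
  case: (mem_step Hexec (d + t2.+1) p RSend) => [->//|[[o' [g [pr [ti [Es [_ [Hl' [-> [_ HW]]]]]]]]]|[x [_ [Hc _]]]]].
  - have [pr' Hl''] := Claim1' (d + t2.+1) (ltac:(lia)).
    rewrite Hl'' in Hl'; case: Hl' => Eo _; subst o'.
    case: HW => [[_ [ts' [v' [Eo [Ey _]]]]]|[Hk _]] //.
    by case: Eo => -> ->.
  - by move: (Hp (d + t2.+1)); rewrite Hc.
have [T HT] := all_ready Hexec Hunf Hfair HA1 HA2 Hp El Hsend.
set T' := maxn T t2.+1.
have [pr0 Hl0] := Claim1' T' (ltac:(lia)).
have [t3 [pr [Ht3 [Hl3 [r Er]]]]] := ev_run (A := @ATrue n V) Hp Hl0 (ev_ret _ _) (fun _ _ _ _ => I).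
subst pr; have [t4 [Ht4 [El4 Hl4]]] := next_step Hp Hl3.
case: r Hl3 Hl4 => [w|] Hl3 Hl4.
  have [Hh4 _] := step_retBS Hexec El4 Hl4; case: Hno; exists t4, RAck; split => //; lia.
have Hl5 := step_retBN Hexec El4 Hl4; rewrite deliver_progE in Hl5.
have Hin : p \in enum proc by rewrite mem_enum.
have [t6 [pr [Ht6 [Hl6 [js Ejs]]]]] := ev_run (A := @ATrue n V) Hp Hl5 (ev_foldr_at f (@ATrue n V) p _ Hin) (fun _ _ _ _ => I).
subst pr.
have HA' : forall s q kd, t6 <= s -> A1' p ts v q kd (mem s q kd).
  move=> s q kd Hs; split; first split.
  - move=> -> ->; apply: Hsend; lia.
  - move=> -> k'; exact: (no_conflict Hexec Hunf HA2 k' s q Hp El).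
  - move=> -> Hq; apply: HT => //; lia.
have [t7 [pr [Ht7 [Hl7 [X [HX EX]]]]]] := ev_run Hp Hl6 (ev_cert p ts v _) HA'.
subst pr; have [t8 [Ht8 [El8 Hl8]]] := next_step Hp Hl7.
have [Hl9 Hm9] := step_write Hexec El8 Hl8.
set K := read_all_regs _ _ in Hl9.
have HA2' : forall s q kd, t8.+1 <= s -> (fun q kd x => q = p -> kd = RDeliver -> List.In X x) q kd (mem s q kd).
  move=> s q kd Hs -> ->; apply: (growth Hexec Hp (k := RDeliver) (t := t8.+1)) => //.
  by rewrite Hm9; exact: In_add_new.
have Hev : EvR (fun q kd x => q = p -> kd = RDeliver -> List.In X x) (fun pr => exists w, pr = PRet (Some w))
    (foldr (refresh_one p) K js).
  apply: ev_trans (ev_foldr_end f _ p K js) _ => _ <-.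
  rewrite /K /read_all_regs; apply: ev_read_all => dl Hdl.
  have HXd : List.In X (dl p) by have [H1 _] := Hdl p; exact: H1 (mem_enum _ _) erefl erefl.
  have [v' [x' ->]] := find_cert_some HXd HX.
  apply: ev_write; apply: ev_here; by exists v'.
have [t10 [pr [Ht10 [Hl10 [w Ew]]]]] := ev_run Hp Hl9 Hev HA2'.
subst pr; have [t11 [Ht11 [El11 Hl11]]] := next_step Hp Hl10.
have [Hh11 _] := step_retBS Hexec El11 Hl11; case: Hno; exists t11, RAck; split => //; lia.
Qed.

End Resil.

Section LinBase.
Variables (n f : nat) (V : eqType).
Local Notation proc := 'I_n.
Local Notation msg := (Defs.msg n V).
Local Notation prog := (Defs.prog n V).
Local Notation MPair := (@Defs.MPair n V).
Local Notation PRet := (@Defs.PRet n V).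
Local Notation Idle := (@Defs.Idle n V).
Local Notation LStep := (@Defs.LStep n V).
Local Notation RAck := (@Defs.RAck V).
Local Notation OBcast := (@Defs.OBcast n V).
Local Notation ODeliver := (@Defs.ODeliver n V).
Local Notation LCorrupt := (@Defs.LCorrupt n V).
Local Notation deliver_prog := (@Defs.deliver_prog n f V).
Local Notation cert_val := (@Defs.cert_val n f V).
Local Notation find_cert := (@Defs.find_cert n f V).
Local Notation valid_cert := (@Defs.valid_cert n f V).
Local Notation init_prog := (@Defs.init_prog n f V).
Local Notation refresh := (@Defs.refresh n f V).
Local Notation refresh_one := (@Defs.refresh_one n f V).
Local Notation exec_step := (@Defs.exec_step n f V).
Local Notation hist := (@Defs.hist n f V).
Local Notation is_execution := (@Defs.is_execution n f V).

Local Notation Running := (@Defs.Running n V).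
Local Notation config := (Defs.config n V).
Local Notation label := (Defs.label n V).
Local Notation op := (Defs.op n V).
Local Notation event := (Defs.event n V).
Local Notation resp := (Defs.resp V).

Variables (c : nat -> config) (l : nat -> label).
Hypothesis Hn : 2 * f < n.
Hypothesis Hexec : is_execution c l.
Hypothesis Hunf : unforgeable c l.
Hypothesis Hfair : fair c l.
Hypothesis HA1 : A1 c l.
Hypothesis HA2 : A2 c l.
Variable Cs : {set proc}.
Hypothesis HC : forall p, p \in Cs <-> correct c p.

Local Notation mem t := (cmem (c t)).
Local Notation loc t := (cloc (c t)).
Local Notation corr t := (ccorr (c t)).
Local Notation H := (hist c l).

Definition Least (P : nat -> Prop) t := P t /\ forall t', t' < t -> ~ P t'.

Lemma Least_unique P a b : Least P a -> Least P b -> a = b.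
Proof.
move=> [Pa Ha] [Pb Hb]; case: (ltngtP a b) => // Hab; [by case: (Hb _ Hab) | by case: (Ha _ Hab)].
Qed.

Lemma Least_exists (P : nat -> Prop) t : P t -> exists t0, Least P t0.
Proof.
move=> Pt; suff: forall m, (exists t, t <= m /\ P t) -> exists t0, Least P t0 by apply; exists t.
elim=> [|m IH] [t1 [Ht1 Pt1]].
  exists 0; split; first by have <- : t1 = 0 by lia. by [].
case: (classic (exists t2, t2 <= m /\ P t2)) => [/IH //|Hno].
exists t1; split => // t' Ht' Pt'; apply: Hno; exists t'; split => //; lia.
Qed.

Lemma Least_le P t0 t : Least P t0 -> P t -> t0 <= t.
Proof. move=> [_ Hl] Pt; rewrite leqNgt; apply/negP => Hlt; exact: Hl _ Hlt Pt. Qed.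

Definition HasCert j ts t := exists q x, q \in Cs /\ List.In x (mem t q RDeliver) /\ cert_val j ts x <> None.
Definition HasCertV j ts v t := exists q x, q \in Cs /\ List.In x (mem t q RDeliver) /\ cert_val j ts x = Some v.
Definition IsB j ts t := Least (HasCert j ts) t.

Lemma HasCert_mono j ts t t' : t <= t' -> HasCert j ts t -> HasCert j ts t'.
Proof.
move=> Ht [q [x [Hq [Hx Hc]]]]; exists q, x; split => //; split => //.
apply: (growth Hexec (proj1 (HC q) Hq)) Ht Hx => //.
Qed.

Lemma HasCertV_mono j ts v t t' : t <= t' -> HasCertV j ts v t -> HasCertV j ts v t'.
Proof.
move=> Ht [q [x [Hq [Hx Hc]]]]; exists q, x; split => //; split => //.
apply: (growth Hexec (proj1 (HC q) Hq)) Ht Hx => //.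
Qed.

Lemma HasCertV_HasCert j ts v t : HasCertV j ts v t -> HasCert j ts t.
Proof. by move=> [q [x [Hq [Hx Hc]]]]; exists q, x; rewrite Hc. Qed.

Lemma HasCert_V j ts t : HasCert j ts t -> exists v, HasCertV j ts v t.
Proof.
move=> [q [x [Hq [Hx Hc]]]]; case E: (cert_val j ts x) Hc => [v|] // _.
by exists v, q, x.
Qed.

Lemma HasCertV_unique j ts v1 v2 t1 t2 : HasCertV j ts v1 t1 -> HasCertV j ts v2 t2 -> v1 = v2.
Proof.
move=> [q1 [x1 [_ [I1 C1]]]] [q2 [x2 [_ [I2 C2]]]]; by have := cert_unique Hexec Hunf C1 I1 C2 I2.
Qed.

Lemma HasCert_0 j ts : ~ HasCert j ts 0.
Proof. by move=> [q [x [_ [Hx _]]]]; move: Hx; case: Hexec => -> _. Qed.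

Lemma IsB_pair j ts j' ts' t : IsB j ts t -> IsB j' ts' t -> j = j' /\ ts = ts'.
Proof.
case: t => [[/HasCert_0 //]|s].
move=> [[q [x [Hq [Hx Hc]]]] Hl] [[q' [x' [Hq' [Hx' Hc']]]] Hl'].
have Hnew : forall q x j ts, q \in Cs -> List.In x (mem s.+1 q RDeliver) -> cert_val j ts x <> None ->
   (forall t', t' < s.+1 -> ~ HasCert j ts t') ->
   exists g pr o, l s = LStep q /\ loc s q = Running o (PWrite RDeliver g pr) /\
     ~ List.In x (mem s q RDeliver) /\ exists X, mem s.+1 q RDeliver = add X (mem s q RDeliver) /\ x = X.
  move=> q0 x0 j0 ts0 Hq0 Hx0 Hc0 Hl0.
  have Hnot : ~ List.In x0 (mem s q0 RDeliver).
    move=> Hin; apply: (Hl0 s (ltnSn _)); by exists q0, x0.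
  case: (mem_step Hexec s q0 RDeliver) => [Em|[[o [g [pr [ti [El [_ [Hlq [Em [_ HW]]]]]]]]]|[x1 [_ [Hc1 _]]]]].
  - by rewrite Em in Hx0.
  - exists g, pr, o; split => //; split => //; split => //.
    case: HW => [[//]|[_ [X [EX _]]]].
    exists X; rewrite Em EX; split => //.
    move: Hx0; rewrite Em EX => /In_add [//|Hin]; by case: Hnot.
  - by have := proj1 (HC q0) Hq0 s; rewrite Hc1.
have [g [pr [o [El [Hlq [_ [X [EX Ex]]]]]]]] := Hnew q x j ts Hq Hx Hc Hl; subst x.
have [g' [pr' [o' [El' [Hlq' [_ [X' [EX' Ex']]]]]]]] := Hnew q' x' j' ts' Hq' Hx' Hc' Hl'; subst x'.
rewrite El in El'; case: El' => Eq; subst q'.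
have EXX : X = X'.
  have : List.In X (mem s.+1 q RDeliver) by rewrite EX; exact: In_add_new.
  rewrite EX' => /In_add [//|Hin].
  have : List.In X (mem s q RDeliver) by [].
  move=> Hin2; exfalso; apply: (Hl s (ltnSn _)); exists q, X; split => //.
subst X'.
case E1: (cert_val j ts X) Hc => [v|] // _; case E2: (cert_val j' ts' X) Hc' => [v'|] // _.
have [sg [EX1 _]] := cert_valP E1; have [sg' [EX2 _]] := cert_valP E2.
rewrite EX1 in EX2; by case: EX2 => -> ->.
Qed.

Definition Resp (p : proc) ti tr (r : resp) :=
  ti < tr /\ H tr = Some (ERes p r) /\ forall s, ti < s < tr -> ~~ ev_of p (H s).

Lemma Resp_unique p ti tr tr' r r' : Resp p ti tr r -> Resp p ti tr' r' -> tr = tr' /\ r = r'.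
Proof.
move=> [H1 [H2 H3]] [H1' [H2' H3']]; case: (ltngtP tr tr') => Ht.
- by have := H3' tr; rewrite H1 Ht H2 /= eqxx => /(_ isT).
- by have := H3 tr'; rewrite H1' Ht H2' /= eqxx => /(_ isT).
- subst; rewrite H2 in H2'; by case: H2'.
Qed.

Lemma hist_inv t p o : H t = Some (EInv p o) -> l t = LInvoke p o.
Proof.
case: (step_inv Hexec t) => [p' o' El' Hp' Hl' E Hh|p' o' q' k' cont' El' Hp' Hl' E Hh|p' o' k' g' pr' El' Hp' Hl' E Hh|p' ts' v' w' El' Hp' Hl' E Hh|p' ts' v' El' Hp' Hl' E Hh|p' j' ts' r' El' Hp' Hl' E Hh|p' El' Hp' Hc' E Hh|p' k' x' El' Hp' E Hh];
  rewrite Hh => //; case=> Ep Eo; by subst.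
Qed.

Lemma inv_hist t p o : l t = LInvoke p o -> H t = Some (EInv p o).
Proof. by move=> El; have [_ [-> _]] := step_invoke Hexec El. Qed.

Lemma hist_res t p r : H t = Some (ERes p r) ->
  l t = LStep p /\ p \notin corr t /\
  ((exists ts v w, r = RAck /\ loc t p = Running (OBcast ts v) (PRet (Some w))) \/
   (exists j ts rr, r = RVal rr /\ loc t p = Running (ODeliver j ts) (PRet rr))).
Proof.
case: (step_inv Hexec t) => [p' o' El' Hp' Hl' E Hh|p' o' q' k' cont' El' Hp' Hl' E Hh|p' o' k' g' pr' El' Hp' Hl' E Hh|p' ts' v' w' El' Hp' Hl' E Hh|p' ts' v' El' Hp' Hl' E Hh|p' j' ts' r' El' Hp' Hl' E Hh|p' El' Hp' Hc' E Hh|p' k' x' El' Hp' E Hh];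
  rewrite Hh => //; case=> Ep Er; subst; split => //; split => //.
- by left; exists ts', v', w'.
- by right; exists j', ts', r'.
Qed.

Lemma resp_info p ti tr o r : correct c p -> l ti = LInvoke p o -> Resp p ti tr r ->
  exists rr, RetOK f c p o ti tr rr /\
   match o with
   | Defs.OBcast _ _ => r = RAck /\ rr <> None
   | Defs.ODeliver _ _ => r = RVal rr
   end.
Proof.
move=> Hp El [Htr [Hh Hev]].
have [Els [Hpc Hcase]] := hist_res Hh.
have Hrun : exists o' rr, loc tr p = Running o' (PRet rr) /\
   match o' with Defs.OBcast _ _ => r = RAck /\ rr <> None | Defs.ODeliver _ _ => r = RVal rr end.
  case: Hcase => [[ts [v [w [-> Hl]]]]|[j [ts [rr [-> Hl]]]]]; [by exists (OBcast ts v), (Some w) | by exists (ODeliver j ts), rr].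
have [o' [rr [Hl Hm]]] := Hrun.
have [ti' [Hti' [Eli' [Hhi' [Hev' [_ Hs]]]]]] := Inv_all Hexec Hpc Hl.
have Eti : ti' = ti.
  case: (ltngtP ti' ti) => // Hlt.
  - by have := Hev' ti; rewrite Hlt Htr (inv_hist El) /= eqxx => /(_ isT).
  - by have := Hev ti'; rewrite Hlt Hti' Hhi' /= eqxx => /(_ isT).
subst ti'; rewrite El in Eli'; case: Eli' => Eo; subst o'.
exists rr; split => //; exact: Hs tr (leqnn _).
Qed.

End LinBase.

Section LinDef.
Variables (n f : nat) (V : eqType).
Local Notation proc := 'I_n.
Local Notation msg := (Defs.msg n V).
Local Notation prog := (Defs.prog n V).
Local Notation MPair := (@Defs.MPair n V).
Local Notation PRet := (@Defs.PRet n V).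
Local Notation Idle := (@Defs.Idle n V).
Local Notation LStep := (@Defs.LStep n V).
Local Notation RAck := (@Defs.RAck V).
Local Notation OBcast := (@Defs.OBcast n V).
Local Notation ODeliver := (@Defs.ODeliver n V).
Local Notation LCorrupt := (@Defs.LCorrupt n V).
Local Notation deliver_prog := (@Defs.deliver_prog n f V).
Local Notation cert_val := (@Defs.cert_val n f V).
Local Notation find_cert := (@Defs.find_cert n f V).
Local Notation valid_cert := (@Defs.valid_cert n f V).
Local Notation init_prog := (@Defs.init_prog n f V).
Local Notation refresh := (@Defs.refresh n f V).
Local Notation refresh_one := (@Defs.refresh_one n f V).
Local Notation exec_step := (@Defs.exec_step n f V).
Local Notation hist := (@Defs.hist n f V).
Local Notation is_execution := (@Defs.is_execution n f V).

Local Notation Running := (@Defs.Running n V).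
Local Notation config := (Defs.config n V).
Local Notation label := (Defs.label n V).
Local Notation op := (Defs.op n V).
Local Notation event := (Defs.event n V).
Local Notation resp := (Defs.resp V).

Variables (c : nat -> config) (l : nat -> label).
Hypothesis Hn : 2 * f < n.
Hypothesis Hexec : is_execution c l.
Hypothesis Hunf : unforgeable c l.
Hypothesis Hfair : fair c l.
Hypothesis HA1 : A1 c l.
Hypothesis HA2 : A2 c l.
Variable Cs : {set proc}.
Hypothesis HC : forall p, p \in Cs <-> correct c p.

Local Notation mem t := (cmem (c t)).
Local Notation loc t := (cloc (c t)).
Local Notation corr t := (ccorr (c t)).
Local Notation H := (hist c l).
Local Notation HasCert := (@HasCert n f V c Cs).
Local Notation HasCertV := (@HasCertV n f V c Cs).
Local Notation IsB := (@IsB n f V c Cs).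
Local Notation Resp := (@Resp n f V c l).

Definition PB t (z : proc * nat * V) :=
  z.1.1 \notin Cs /\ IsB z.1.1 z.1.2 t /\ HasCertV z.1.1 z.1.2 z.2 t.

Lemma PB_unique t z1 z2 : PB t z1 -> PB t z2 -> z1 = z2.
Proof.
case: z1 => [[j1 ts1] v1]; case: z2 => [[j2 ts2] v2] [_ [B1 V1]] [_ [B2 V2]]; simpl in *.
have [Ej Ets] := IsB_pair Hexec HC B1 B2; subst j2 ts2.
by rewrite (HasCertV_unique Hexec Hunf V1 V2).
Qed.

Definition Bz t : option (proc * nat * V) :=
  match excluded_middle_informative (exists z, PB t z) with
  | left h => Some (proj1_sig (constructive_indefinite_description _ h))
  | right _ => None
  end.

Lemma BzS t z : Bz t = Some z -> PB t z.
Proof.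
rewrite /Bz; case: excluded_middle_informative => // h [<-].
exact: proj2_sig (constructive_indefinite_description _ h).
Qed.

Lemma Bz_of t z : PB t z -> Bz t = Some z.
Proof.
move=> Hz; rewrite /Bz; case: excluded_middle_informative => [h|h]; last by case: h; exists z.
congr Some; apply: PB_unique (proj2_sig (constructive_indefinite_description _ h)) Hz.
Qed.

Definition Hp (k : nat) : option event :=
  match k %% 3 with
  | 0 => omap (fun z => EInv z.1.1 (OBcast z.1.2 z.2)) (Bz (k %/ 3))
  | 1 => omap (fun z => ERes z.1.1 RAck) (Bz (k %/ 3))
  | _ => match H (k %/ 3) with Some e => if ev_proc e \in Cs then Some e else None | None => None end
  end.

Lemma divmod3 t r : r < 3 -> (t * 3 + r) %/ 3 = t /\ (t * 3 + r) %% 3 = r.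
Proof. move=> Hr; rewrite divnMDl // modnMDl divn_small // modn_small //; by rewrite addn0. Qed.

Lemma Hp0 t : Hp (t * 3) = omap (fun z => EInv z.1.1 (OBcast z.1.2 z.2)) (Bz t).
Proof. have [E1 E2] := divmod3 t (isT : 0 < 3); rewrite addn0 in E1 E2; by rewrite /Hp E2 E1. Qed.

Lemma Hp1 t : Hp (t * 3 + 1) = omap (fun z => ERes z.1.1 RAck) (Bz t).
Proof. have [E1 E2] := divmod3 t (isT : 1 < 3); by rewrite /Hp E2 E1. Qed.

Lemma Hp2 t : Hp (t * 3 + 2) = match H t with Some e => if ev_proc e \in Cs then Some e else None | None => None end.
Proof. have [E1 E2] := divmod3 t (isT : 2 < 3); by rewrite /Hp E2 E1. Qed.

Lemma idx3 k : exists t r, r < 3 /\ k = t * 3 + r.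
Proof. exists (k %/ 3), (k %% 3); split; [exact: ltn_pmod | exact: divn_eq]. Qed.

Lemma ev_Hp2 p t : ev_of p (Hp (t * 3 + 2)) = (p \in Cs) && ev_of p (H t).
Proof.
rewrite Hp2; case: (H t) => [e|] /=; last by rewrite andbF.
case: ifP => He /=; case: eqP => [<-|_]; by rewrite ?He ?eqxx ?andbF.
Qed.

Lemma ev_Hp0 p t : ev_of p (Hp (t * 3)) = if Bz t is Some z then z.1.1 == p else false.
Proof. by rewrite Hp0; case: (Bz t). Qed.

Lemma ev_Hp1 p t : ev_of p (Hp (t * 3 + 1)) = if Bz t is Some z then z.1.1 == p else false.
Proof. by rewrite Hp1; case: (Bz t). Qed.

Definition OpPt (p : proc) ti (r : resp) t :=
  exists tr j ts, l ti = LInvoke p (ODeliver j ts) /\ Resp p ti tr r /\ ti < t <= tr /\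
   ((r = RVal None /\ ~ HasCert j ts t) \/ (exists v, r = RVal (Some v) /\ HasCertV j ts v t)).

Definition Lin (k : nat) (e : nat * resp) :=
  (exists t z, k = t * n.+1 /\ Bz t = Some z /\ e = (t * 3, RAck)) \/
  (exists t j ts v ti, k = t * n.+1 /\ j \in Cs /\ IsB j ts t /\ l ti = LInvoke j (OBcast ts v) /\ e = (ti * 3 + 2, RAck)) \/
  (exists t (p : proc) ti r, k = t * n.+1 + p.+1 /\ p \in Cs /\ Least (OpPt p ti r) t /\ e = (ti * 3 + 2, r)).

Lemma slot_dec t1 t2 s1 s2 : s1 < n.+1 -> s2 < n.+1 -> t1 * n.+1 + s1 = t2 * n.+1 + s2 -> t1 = t2 /\ s1 = s2.
Proof.
move=> H1 H2 E.
have D : forall t s, s < n.+1 -> (t * n.+1 + s) %/ n.+1 = t /\ (t * n.+1 + s) %% n.+1 = s.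
  move=> t s Hs; rewrite divnMDl // modnMDl divn_small // modn_small //; by rewrite addn0.
have [A1' B1] := D t1 s1 H1; have [A2' B2] := D t2 s2 H2.
by split; [rewrite -A1' -A2' E | rewrite -B1 -B2 E].
Qed.

Lemma OpPt_ti p ti ti' r r' t : OpPt p ti r t -> OpPt p ti' r' t -> ti = ti' /\ r = r'.
Proof.
move=> [tr [j [ts [El [R [/andP [Ht1 Ht2] _]]]]]] [tr' [j' [ts' [El' [R' [/andP [Ht1' Ht2'] _]]]]]].
have key : forall (a a' b : nat) (ra : resp) (ja : proc) (tsa : nat) (ja' : proc) (tsa' : nat),
   l a = LInvoke p (ODeliver ja tsa) -> l a' = LInvoke p (ODeliver ja' tsa') ->
   Resp p a b ra -> a < a' -> a' < t -> t <= b -> False.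
  move=> a a' b ra ja tsa ja' tsa' Ea Ea' [_ [_ Hev]] Hlt H1 H2.
  have Hab : a < a' < b by apply/andP; split; lia.
  by have := Hev a' Hab; rewrite (inv_hist Hexec Ea') /= eqxx.
have Eti : ti = ti'.
  case: (ltngtP ti ti') => // Hlt; exfalso.
  - exact: (key ti ti' tr r j ts j' ts' El El' R Hlt Ht1' Ht2).
  - exact: (key ti' ti tr' r' j' ts' j ts El' El R' Hlt Ht1 Ht2').
subst ti'; split => //; have [_ ->] := Resp_unique R R'; done.
Qed.

Lemma Lin_fun k e1 e2 : Lin k e1 -> Lin k e2 -> e1 = e2.
Proof.
have S0 : forall t1 t2 (p : proc), t1 * n.+1 <> t2 * n.+1 + p.+1.
  move=> t1 t2 p E; have E' : t1 * n.+1 + 0 = t2 * n.+1 + p.+1 by rewrite addn0.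
  have Hp' : p.+1 < n.+1 by rewrite ltnS ltn_ord.
  by have [_ Hs] := slot_dec (ltn0Sn n) Hp' E'.
have T0 : forall t1 t2, t1 * n.+1 = t2 * n.+1 -> t1 = t2.
  move=> t1 t2 E; have E' : t1 * n.+1 + 0 = t2 * n.+1 + 0 by rewrite !addn0.
  by have [] := slot_dec (ltn0Sn n) (ltn0Sn n) E'.
move=> [[t1 [z1 [-> [B1 ->]]]]|[[t1 [j1 [ts1 [v1 [ti1 [-> [Hj1 [I1 [L1 ->]]]]]]]]]|[t1 [p1 [ti1 [r1 [-> [Hp1 [P1 ->]]]]]]]]]
       [[t2 [z2 [E [B2 ->]]]]|[[t2 [j2 [ts2 [v2 [ti2 [E [Hj2 [I2 [L2 ->]]]]]]]]]|[t2 [p2 [ti2 [r2 [E [Hp2 [P2 ->]]]]]]]]].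
- have Et := T0 _ _ E; by subst t2.
- have Et := T0 _ _ E; subst t2; have [Hz1 [I1 _]] := BzS B1.
  have [Ej _] := IsB_pair Hexec HC I1 I2; subst j2; by rewrite Hj2 in Hz1.
- by case: (S0 _ _ _ E).
- have Et := T0 _ _ E; subst t2; have [Hz2 [I2 _]] := BzS B2.
  have [Ej _] := IsB_pair Hexec HC I1 I2; subst j1; by rewrite Hj1 in Hz2.
- have Et := T0 _ _ E; subst t2.
  have [Ej Ets] := IsB_pair Hexec HC I1 I2; subst j2 ts2.
  by rewrite (HA2 (proj1 (HC j1) Hj1) L1 L2).
- by case: (S0 _ _ _ E).
- by case: (S0 _ _ _ (esym E)).
- by case: (S0 _ _ _ (esym E)).
- have Hp1' : p1.+1 < n.+1 by rewrite ltnS ltn_ord.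
  have Hp2' : p2.+1 < n.+1 by rewrite ltnS ltn_ord.
  have [Et Ep] := slot_dec Hp1' Hp2' E.
  subst t2; have Ep' : p1 = p2 by apply: val_inj; case: Ep.
  subst p2; have [Eti Er] := OpPt_ti (proj1 P1) (proj1 P2); by subst.
Qed.

Definition lin (k : nat) : option (nat * resp) :=
  match excluded_middle_informative (exists e, Lin k e) with
  | left h => Some (proj1_sig (constructive_indefinite_description _ h))
  | right _ => None
  end.

Lemma linS k e : lin k = Some e <-> Lin k e.
Proof.
rewrite /lin; case: excluded_middle_informative => [h|h].
- split; first by case=> <-; exact: proj2_sig (constructive_indefinite_description _ h).
  move=> He; congr Some; exact: Lin_fun (proj2_sig (constructive_indefinite_description _ h)) He.
- split => // He; case: h; by exists e.
Qed.

End LinDef.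

Section LinProof.
Variables (n f : nat) (V : eqType).
Local Notation proc := 'I_n.
Local Notation msg := (Defs.msg n V).
Local Notation prog := (Defs.prog n V).
Local Notation MPair := (@Defs.MPair n V).
Local Notation PRet := (@Defs.PRet n V).
Local Notation Idle := (@Defs.Idle n V).
Local Notation LStep := (@Defs.LStep n V).
Local Notation RAck := (@Defs.RAck V).
Local Notation OBcast := (@Defs.OBcast n V).
Local Notation ODeliver := (@Defs.ODeliver n V).
Local Notation LCorrupt := (@Defs.LCorrupt n V).
Local Notation deliver_prog := (@Defs.deliver_prog n f V).
Local Notation cert_val := (@Defs.cert_val n f V).
Local Notation find_cert := (@Defs.find_cert n f V).
Local Notation valid_cert := (@Defs.valid_cert n f V).
Local Notation init_prog := (@Defs.init_prog n f V).
Local Notation refresh := (@Defs.refresh n f V).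
Local Notation refresh_one := (@Defs.refresh_one n f V).
Local Notation exec_step := (@Defs.exec_step n f V).
Local Notation hist := (@Defs.hist n f V).
Local Notation is_execution := (@Defs.is_execution n f V).

Local Notation Running := (@Defs.Running n V).
Local Notation config := (Defs.config n V).
Local Notation label := (Defs.label n V).
Local Notation op := (Defs.op n V).
Local Notation event := (Defs.event n V).
Local Notation resp := (Defs.resp V).
Local Notation lstate := (Defs.lstate n V).

Variables (c : nat -> config) (l : nat -> label).
Hypothesis Hn : 2 * f < n.
Hypothesis Hexec : is_execution c l.
Hypothesis Hunf : unforgeable c l.
Hypothesis Hfair : fair c l.
Hypothesis HA1 : A1 c l.
Hypothesis HA2 : A2 c l.
Variable Cs : {set proc}.
Hypothesis HC : forall p, p \in Cs <-> correct c p.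

Local Notation mem t := (cmem (c t)).
Local Notation loc t := (cloc (c t)).
Local Notation corr t := (ccorr (c t)).
Local Notation H := (hist c l).
Local Notation HasCert := (@HasCert n f V c Cs).
Local Notation HasCertV := (@HasCertV n f V c Cs).
Local Notation IsB := (@IsB n f V c Cs).
Local Notation Resp := (@Resp n f V c l).
Local Notation Bz := (@Bz n f V c Cs).
Local Notation Hp := (@Hp n f V c l Cs).
Local Notation Lin := (@Lin n f V c l Cs).
Local Notation lin := (@lin n f V c l Cs).
Local Notation OpPt := (@OpPt n f V c l Cs).

Definition isIdle (s : lstate) : bool := if s is Defs.Idle then true else false.

Lemma idle_step p s : ~~ ev_of p (H s) -> isIdle (loc s.+1 p) = isIdle (loc s p).
Proof.
case: (step_inv Hexec s) => [p' o' El' Hp' Hl' E Hh|p' o' q' k' cont' El' Hp' Hl' E Hh|p' o' k' g' pr' El' Hp' Hl' E Hh|p' ts' v' w' El' Hp' Hl' E Hh|p' ts' v' El' Hp' Hl' E Hh|p' j' ts' r' El' Hp' Hl' E Hh|p' El' Hp' Hc' E Hh|p' k' x' El' Hp' E Hh];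
  move=> Hev; rewrite Hh /= in Hev; rewrite E /= /upd_loc //; case: eqP => // Ep; subst p';
  rewrite ?Hl' //; by rewrite eqxx in Hev.
Qed.

Lemma idle_steps p a b : a <= b -> (forall s, a <= s < b -> ~~ ev_of p (H s)) ->
  isIdle (loc b p) = isIdle (loc a p).
Proof.
move=> /subnK <-; elim: (b - a) => [|d IH] //= Hn'.
rewrite addSn idle_step; last by apply: Hn'; lia.
apply: IH => s Hs; apply: Hn'; lia.
Qed.

Lemma ev_cases p s : ev_of p (H s) ->
  (exists o, H s = Some (EInv p o) /\ isIdle (loc s p) /\ ~~ isIdle (loc s.+1 p)) \/
  (exists r, H s = Some (ERes p r) /\ ~~ isIdle (loc s p) /\ isIdle (loc s.+1 p)).
Proof.
case Eh: (H s) => [[p' o|p' r]|] //= /eqP Ep; subst p'.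
- left; exists o; split => //; have := hist_inv Hexec Eh => El.
  have [H1 [_ H3]] := step_invoke Hexec El; by rewrite H1 H3.
- right; exists r; split => //.
  have [El [_ [[ts [v [w [_ Hl]]]]|[j [ts [rr [_ Hl]]]]]]] := hist_res Hexec Eh; rewrite Hl; split => //.
  + by have [_ ->] := step_retBS Hexec El Hl.
  + by have [_ ->] := step_retD Hexec El Hl.
Qed.

Lemma H_first p s : ev_of p (H s) -> (forall s', s' < s -> ~~ ev_of p (H s')) -> is_inv (H s).
Proof.
move=> He Hb; have Hi : isIdle (loc s p).
  have E0 := @idle_steps p 0 s (leq0n s) (fun s' Hs' => Hb s' (proj2 (andP Hs'))).
  rewrite E0; by case: Hexec => -> _.
case: (ev_cases He) => [[o [Eh _]]|[r [_ [Hn' _]]]]; first by rewrite Eh.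
by rewrite Hi in Hn'.
Qed.

Lemma H_alt p s s' : ev_of p (H s) -> s < s' -> ev_of p (H s') ->
  (forall k, s < k < s' -> ~~ ev_of p (H k)) -> is_inv (H s) != is_inv (H s').
Proof.
move=> He Hlt He' Hb.
have Hid : isIdle (loc s' p) = isIdle (loc s.+1 p).
  apply: idle_steps => //; move=> k /andP [H1 H2]; apply: Hb; lia.
case: (ev_cases He) => [[o [Eh1 [_ Hn1]]]|[r [Eh1 [_ Hi1]]]];
case: (ev_cases He') => [[o' [Eh2 [Hi2 _]]]|[r' [Eh2 [Hn2 _]]]]; rewrite Eh1 Eh2 //=.
- by rewrite Hid in Hi2; rewrite Hi2 in Hn1.
- by rewrite Hid Hi1 in Hn2.
Qed.

Lemma Hp_keep p t : p \in Cs -> ev_of p (H t) -> Hp (t * 3 + 2) = H t.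
Proof.
move=> Hp' He; rewrite Hp2; case E: (H t) He => [e|] //= /eqP Ep; by rewrite Ep Hp'.
Qed.

Lemma Bz_notC t z : Bz t = Some z -> z.1.1 \notin Cs.
Proof. by move=> /BzS [H1 _]. Qed.

Lemma evC p k : p \in Cs -> ev_of p (Hp k) -> exists t, k = t * 3 + 2 /\ ev_of p (H t).
Proof.
move=> Hp' He; have [t [r [Hr Ek]]] := idx3 k; subst k.
case: r Hr He => [|[|[|]]] // _.
- rewrite addn0 ev_Hp0; case E: (Bz t) => [z|] // /eqP Ez.
  by have := Bz_notC E; rewrite Ez Hp'.
- rewrite ev_Hp1; case E: (Bz t) => [z|] // /eqP Ez.
  by have := Bz_notC E; rewrite Ez Hp'.
- rewrite ev_Hp2 Hp' /= => He; by exists t.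
Qed.

Lemma evNC p k : p \notin Cs -> ev_of p (Hp k) ->
  exists t z, Bz t = Some z /\ z.1.1 = p /\ (k = t * 3 \/ k = t * 3 + 1).
Proof.
move=> Hp' He; have [t [r [Hr Ek]]] := idx3 k; subst k.
case: r Hr He => [|[|[|]]] // _.
- rewrite addn0 ev_Hp0; case E: (Bz t) => [z|] // /eqP Ez; exists t, z; split => //; split => //; by left.
- rewrite ev_Hp1; case E: (Bz t) => [z|] // /eqP Ez; exists t, z; split => //; split => //; by right.
- by rewrite ev_Hp2 (negbTE Hp').
Qed.

Lemma wf_Hp : wf_hist Hp.
Proof.
move=> p; case: (boolP (p \in Cs)) => Hp'.
- split.
  + move=> j He Hb; have [t [Ej Het]] := evC Hp' He; subst j.
    rewrite (Hp_keep Hp' Het); apply: (H_first Het) => s' Hs'.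
    have := Hb (s' * 3 + 2) (ltac:(lia)); by rewrite ev_Hp2 Hp'.
  + move=> i j He [Hij [He' Hb]].
    have [s [Ei Hes]] := evC Hp' He; have [s' [Ej Hes']] := evC Hp' He'; subst i j.
    rewrite (Hp_keep Hp' Hes) (Hp_keep Hp' Hes'); have Hss : s < s' by lia.
    apply: (H_alt Hes Hss Hes').
    move=> k Hk; have := Hb (k * 3 + 2) (ltac:(lia)); by rewrite ev_Hp2 Hp'.
- split.
  + move=> j He Hb; have [t [z [Bt [Ez [Ej|Ej]]]]] := evNC Hp' He; subst j.
    * by rewrite Hp0 Bt.
    * have := Hb (t * 3) (ltac:(lia)); by rewrite ev_Hp0 Bt Ez eqxx.
  + move=> i j He [Hij [He' Hb]].
    have [t [z [Bt [Ez Ei]]]] := evNC Hp' He; have [t' [z' [Bt' [Ez' Ej]]]] := evNC Hp' He'.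
    case: Ei => Ei; case: Ej => Ej; subst i j.
    * exfalso; have := Hb (t * 3 + 1) (ltac:(lia)); by rewrite ev_Hp1 Bt Ez eqxx.
    * have Et : t' = t.
        case: (ltngtP t' t) => // Hlt; first lia.
        have := Hb (t * 3 + 1) (ltac:(lia)); by rewrite ev_Hp1 Bt Ez eqxx.
      subst t'; by rewrite Hp0 Hp1 Bt.
    * by rewrite Hp0 Hp1 Bt Bt'.
    * exfalso; have := Hb (t' * 3) (ltac:(lia)); by rewrite ev_Hp0 Bt' Ez' eqxx.
Qed.

End LinProof.

Section LinProof2.
Variables (n f : nat) (V : eqType).
Local Notation proc := 'I_n.
Local Notation msg := (Defs.msg n V).
Local Notation prog := (Defs.prog n V).
Local Notation MPair := (@Defs.MPair n V).
Local Notation PRet := (@Defs.PRet n V).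
Local Notation Idle := (@Defs.Idle n V).
Local Notation LStep := (@Defs.LStep n V).
Local Notation RAck := (@Defs.RAck V).
Local Notation OBcast := (@Defs.OBcast n V).
Local Notation ODeliver := (@Defs.ODeliver n V).
Local Notation LCorrupt := (@Defs.LCorrupt n V).
Local Notation deliver_prog := (@Defs.deliver_prog n f V).
Local Notation cert_val := (@Defs.cert_val n f V).
Local Notation find_cert := (@Defs.find_cert n f V).
Local Notation valid_cert := (@Defs.valid_cert n f V).
Local Notation init_prog := (@Defs.init_prog n f V).
Local Notation refresh := (@Defs.refresh n f V).
Local Notation refresh_one := (@Defs.refresh_one n f V).
Local Notation exec_step := (@Defs.exec_step n f V).
Local Notation hist := (@Defs.hist n f V).
Local Notation is_execution := (@Defs.is_execution n f V).

Local Notation Running := (@Defs.Running n V).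
Local Notation config := (Defs.config n V).
Local Notation label := (Defs.label n V).
Local Notation op := (Defs.op n V).
Local Notation event := (Defs.event n V).
Local Notation resp := (Defs.resp V).
Local Notation lstate := (Defs.lstate n V).

Variables (c : nat -> config) (l : nat -> label).
Hypothesis Hn : 2 * f < n.
Hypothesis Hexec : is_execution c l.
Hypothesis Hunf : unforgeable c l.
Hypothesis Hfair : fair c l.
Hypothesis HA1 : A1 c l.
Hypothesis HA2 : A2 c l.
Variable Cs : {set proc}.
Hypothesis HC : forall p, p \in Cs <-> correct c p.

Local Notation mem t := (cmem (c t)).
Local Notation loc t := (cloc (c t)).
Local Notation corr t := (ccorr (c t)).
Local Notation H := (hist c l).
Local Notation HasCert := (@HasCert n f V c Cs).
Local Notation HasCertV := (@HasCertV n f V c Cs).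
Local Notation IsB := (@IsB n f V c Cs).
Local Notation Resp := (@Resp n f V c l).
Local Notation Bz := (@Bz n f V c Cs).
Local Notation Hp := (@Hp n f V c l Cs).
Local Notation Lin := (@Lin n f V c l Cs).
Local Notation lin := (@lin n f V c l Cs).
Local Notation OpPt := (@OpPt n f V c l Cs).

Local Notation N := n.+1.

Lemma resp_C ti j r : resp_at Hp (ti * 3 + 2) j r ->
  exists p o tr, p \in Cs /\ H ti = Some (EInv p o) /\ j = tr * 3 + 2 /\ Resp p ti tr r.
Proof.
move=> [p [o [Hi [[Hij [Hej Hb]] Hj]]]].
move: Hi; rewrite Hp2; case E: (H ti) => [e|] //; case: ifP => Hin // [Ee]; subst e.
have Hp' : p \in Cs by [].
have [tr [Ej Het]] := evC Hp' Hej; subst j.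
rewrite (Hp_keep Hp' Het) in Hj.
exists p, o, tr; split => //; split => //; split => //; split; first lia.
split => // s /andP [H1 H2]; have := Hb (s * 3 + 2) (ltac:(lia)); by rewrite ev_Hp2 Hp'.
Qed.

Lemma resp_B t j r : resp_at Hp (t * 3) j r -> j = t * 3 + 1 /\ r = RAck /\ exists z, Bz t = Some z.
Proof.
move=> [p [o [Hi [[Hij [Hej Hb]] Hj]]]].
move: Hi; rewrite Hp0; case E: (Bz t) => [z|] //= [Ep _].
have Ej : j = t * 3 + 1.
  case: (ltngtP j (t * 3 + 1)) => // Hlt; first lia.
  have := Hb (t * 3 + 1) (ltac:(lia)); by rewrite ev_Hp1 E Ep eqxx.
subst j; move: Hj; rewrite Hp1 E /= => [[_ <-]]; split => //; split => //; by exists z.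
Qed.

Lemma LinInfo k i r : Lin k (i, r) -> exists tau s, k = tau * N + s /\ s < N /\
  ((i = tau * 3 /\ r = RAck /\ exists z, Bz tau = Some z) \/
   (exists ti p o, i = ti * 3 + 2 /\ p \in Cs /\ H ti = Some (EInv p o) /\ ti < tau /\
      forall tr r0, Resp p ti tr r0 -> tau <= tr /\ r0 = r)).
Proof.
move=> [[t [z [-> [Bt [-> ->]]]]]|[[t [j [ts [v [ti [-> [Hj [Ib [Lti [-> ->]]]]]]]]]]|[t [p [ti [r' [-> [Hp' [P [-> ->]]]]]]]]]].
- exists t, 0; rewrite addn0; split => //; split => //; left; split => //; split => //; by exists z.
- exists t, 0; rewrite addn0; split => //; split => //; right.
  have Hjc := proj1 (HC j) Hj.
  exists ti, j, (OBcast ts v); split => //; split => //; split; first by have := inv_hist Hexec Lti.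
  split.
    have [v' [q [x [Hq [Hx Hc]]]]] := HasCert_V (proj1 Ib).
    have [t0 [Ht0 Lt0]] := cert_inv Hexec Hunf Hc Hx Hjc.
    by rewrite -(HA2 Hjc Lt0 Lti).
  move=> tr r0 R; have [rr [Hret [Er Hrr]]] := resp_info Hexec Hjc Lti R.
  split => //; case: rr Hret Hrr => [w|] /= Hret Hne; last by case: Hne.
  have [w' [x [/andP [H1 H2] [Hc Hx]]]] := Hret.
  have HC1 : HasCert j ts w'.+1 by exists j, x; rewrite Hc.
  have := Least_le Ib HC1; lia.
- exists t, p.+1; split => //; split; first by rewrite ltnS ltn_ord.
  right; have [tr' [j [ts [Lti [R [/andP [H1 H2] _]]]]]] := proj1 P.
  exists ti, p, (ODeliver j ts); split => //; split => //; split; first by have := inv_hist Hexec Lti.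
  split => // tr r0 R0; have [Etr Er] := Resp_unique R0 R; subst; split => //.
Qed.

Lemma Lin_complete i : complete Hp i -> exists k r, Lin k (i, r).
Proof.
move=> [j [r0 Hr]]; have [t [s [Hs Ei]]] := idx3 i; subst i.
case: s Hs Hr => [|[|[|]]] // _ Hr.
- rewrite addn0 in Hr *; have [_ [_ [z Bt]]] := resp_B Hr.
  exists (t * N), RAck; left; exists t, z; split => //.
- exfalso; move: Hr => [p [o [Hi _]]]; move: Hi; rewrite Hp1; by case: (Bz t).
- have [p [o [tr [Hp' [Hh [Ej R]]]]]] := resp_C Hr.
  have Hpc := proj1 (HC p) Hp'; have Lti := hist_inv Hexec Hh.
  have [rr [Hret Hm]] := resp_info Hexec Hpc Lti R.
  case: o Lti Hh Hret Hm => [ts v|j' ts] Lti Hh Hret Hm.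
  + case: rr Hret Hm => [w|] /= Hret [_ Hne]; last by case: Hne.
    have [w' [x [/andP [H1 H2] [Hc Hx]]]] := Hret.
    have HC1 : HasCert p ts w'.+1 by exists p, x; rewrite Hc.
    have [B IB] := Least_exists Hn HC1.
    exists (B * N), RAck; right; left; exists B, p, ts, v, t; by [].
  + have [s Hs] : exists s, OpPt p t r0 s.
      case: rr Hret Hm => [w|] /= Hret Er; subst r0.
      * have [w' [x [/andP [H1 H2] [Hc Hx]]]] := Hret.
        exists w'.+1, tr, j', ts; split => //; split => //; split; first by apply/andP; split; lia.
        right; exists w; split => //; by exists p, x.
      * have [s [/andP [H1 H2] Hq]] := Hret.
        exists s, tr, j', ts; split => //; split => //; split; first by apply/andP; split; lia.
        left; split => // [[q [x [Hq' [Hx Hc]]]]].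
        have [tq [/andP [Hq1 Hq2] Hn']] := Hq q.
        apply: Hc; apply: Hn'; exact: (growth Hexec (proj1 (HC q) Hq') (k := RDeliver)) Hq1 Hx.
    have [s0 Ls] := Least_exists Hn Hs.
    exists (s0 * N + p.+1), r0; right; right; exists s0, p, t, r0; by [].
Qed.

Lemma Lin_entry k i r : Lin k (i, r) -> is_inv (Hp i) /\ forall j r0, resp_at Hp i j r0 -> r = r0.
Proof.
move=> HL; have [tau [s [Ek [Hs [[-> [-> [z Bt]]]|[ti [p [o [-> [Hp' [Hh [Hti HR]]]]]]]]]]]] := LinInfo HL.
- split; first by rewrite Hp0 Bt.
  move=> j r0 /resp_B [_ [-> _]] //.
- have He : ev_of p (H ti) by rewrite Hh /= eqxx.
  split; first by rewrite (Hp_keep Hp' He) Hh.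
  move=> j r0 /resp_C [p' [o' [tr [Hp'' [Hh' [Ej R]]]]]].
  rewrite Hh in Hh'; case: Hh' => Ep _; subst p'.
  by have [_ ->] := HR tr r0 R.
Qed.

Lemma Lin_once k1 k2 i r1 r2 : Lin k1 (i, r1) -> Lin k2 (i, r2) -> k1 = k2.
Proof.
move=> [[t1 [z1 [-> [B1 Ei1]]]]|[[t1 [j1 [ts1 [v1 [ti1 [-> [Hj1 [I1 [L1 Ei1]]]]]]]]]|[t1 [p1 [ti1 [r1' [-> [Hp1 [P1 Ei1]]]]]]]]]
       [[t2 [z2 [-> [B2 Ei2]]]]|[[t2 [j2 [ts2 [v2 [ti2 [-> [Hj2 [I2 [L2 Ei2]]]]]]]]]|[t2 [p2 [ti2 [r2' [-> [Hp2' [P2 Ei2]]]]]]]]];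
  case: Ei1 => Ei1 _; case: Ei2 => Ei2 _; subst i; try lia.
- have Eti : ti1 = ti2 by lia. subst ti2; rewrite L1 in L2; case: L2 => Ej Ets _; subst j2 ts2.
  by rewrite (Least_unique I1 I2).
- have Eti : ti1 = ti2 by lia. subst ti2; have [tr [j [ts [L _]]]] := proj1 P2; by rewrite L1 in L.
- have Eti : ti1 = ti2 by lia. subst ti2; have [tr [j [ts [L _]]]] := proj1 P1; by rewrite L2 in L.
- have Eti : ti1 = ti2 by lia. subst ti2.
  have [tr1 [j1 [ts1 [L1 _]]]] := proj1 P1; have [tr2 [j2 [ts2 [L2 _]]]] := proj1 P2.
  rewrite L1 in L2; case: L2 => Ep _ _; subst p2.
  have [tr1' [j1' [ts1' [_ [R1 _]]]]] := proj1 P1; have [tr2' [j2' [ts2' [_ [R2 _]]]]] := proj1 P2.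
  have [_ Er] := Resp_unique R1 R2; subst r2'.
  by rewrite (Least_unique P1 P2).
Qed.

End LinProof2.

Section LinProof3.
Variables (n f : nat) (V : eqType).
Local Notation proc := 'I_n.
Local Notation msg := (Defs.msg n V).
Local Notation prog := (Defs.prog n V).
Local Notation MPair := (@Defs.MPair n V).
Local Notation PRet := (@Defs.PRet n V).
Local Notation Idle := (@Defs.Idle n V).
Local Notation LStep := (@Defs.LStep n V).
Local Notation RAck := (@Defs.RAck V).
Local Notation OBcast := (@Defs.OBcast n V).
Local Notation ODeliver := (@Defs.ODeliver n V).
Local Notation LCorrupt := (@Defs.LCorrupt n V).
Local Notation deliver_prog := (@Defs.deliver_prog n f V).
Local Notation cert_val := (@Defs.cert_val n f V).
Local Notation find_cert := (@Defs.find_cert n f V).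
Local Notation valid_cert := (@Defs.valid_cert n f V).
Local Notation init_prog := (@Defs.init_prog n f V).
Local Notation refresh := (@Defs.refresh n f V).
Local Notation refresh_one := (@Defs.refresh_one n f V).
Local Notation exec_step := (@Defs.exec_step n f V).
Local Notation hist := (@Defs.hist n f V).
Local Notation is_execution := (@Defs.is_execution n f V).

Local Notation Running := (@Defs.Running n V).
Local Notation config := (Defs.config n V).
Local Notation label := (Defs.label n V).
Local Notation op := (Defs.op n V).
Local Notation event := (Defs.event n V).
Local Notation resp := (Defs.resp V).
Local Notation lstate := (Defs.lstate n V).

Variables (c : nat -> config) (l : nat -> label).
Hypothesis Hn : 2 * f < n.
Hypothesis Hexec : is_execution c l.
Hypothesis Hunf : unforgeable c l.
Hypothesis Hfair : fair c l.
Hypothesis HA1 : A1 c l.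
Hypothesis HA2 : A2 c l.
Variable Cs : {set proc}.
Hypothesis HC : forall p, p \in Cs <-> correct c p.

Local Notation mem t := (cmem (c t)).
Local Notation loc t := (cloc (c t)).
Local Notation corr t := (ccorr (c t)).
Local Notation H := (hist c l).
Local Notation HasCert := (@HasCert n f V c Cs).
Local Notation HasCertV := (@HasCertV n f V c Cs).
Local Notation IsB := (@IsB n f V c Cs).
Local Notation Resp := (@Resp n f V c l).
Local Notation Bz := (@Bz n f V c Cs).
Local Notation Hp := (@Hp n f V c l Cs).
Local Notation Lin := (@Lin n f V c l Cs).
Local Notation lin := (@lin n f V c l Cs).
Local Notation OpPt := (@OpPt n f V c l Cs).

Local Notation N := n.+1.

Lemma mulN_lt ta sa tb sb : ta < tb -> sa < N -> ta * N + sa < tb * N + sb.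
Proof.
move=> Ht Hs; have : ta.+1 * N <= tb * N by rewrite leq_mul2r Ht orbT.
rewrite mulSn; lia.
Qed.

Lemma mulN_le_inv ta tb sb : 0 < sb < N -> tb * N < ta * N + sb -> tb <= ta.
Proof.
move=> /andP [Hs1 Hs2] H0; rewrite leqNgt; apply/negP => Hlt.
have : ta.+1 * N <= tb * N by rewrite leq_mul2r Hlt orbT.
rewrite mulSn; lia.
Qed.

Lemma mulN_le ta tb sb : tb <= ta -> 0 < sb -> tb * N < ta * N + sb.
Proof. move=> Ht Hs; have : tb * N <= ta * N by rewrite leq_mul2r Ht orbT. lia. Qed.

Lemma Lin_rt a ja ra kb ib rb : resp_at Hp a ja ra -> ja < ib -> Lin kb (ib, rb) ->
  exists ka r, ka < kb /\ Lin ka (a, r).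
Proof.
move=> Hr Hlt Hb.
have [ka [r Ha]] := Lin_complete Hn Hexec HC (ex_intro _ ja (ex_intro _ ra Hr)).
exists ka, r; split => //.
have [ta [sa [Eka [Hsa Ia]]]] := LinInfo Hn Hexec Hunf HA2 HC Ha.
have [tb [sb [Ekb [Hsb Ib]]]] := LinInfo Hn Hexec Hunf HA2 HC Hb.
have H1 : ta * 3 < ja.
  case: Ia => [[Ea _]|[ti [p [o [Ea [Hp' [Hh [Hti HR]]]]]]]]; subst a.
  - by have [-> _] := resp_B Hn Hr; lia.
  - have [p' [o' [tr [_ [Hh' [Ej R]]]]]] := resp_C Hn Hr.
    rewrite Hh in Hh'; case: Hh' => Ep _; subst p'.
    have [Htr _] := HR tr ra R; lia.
have H2 : ib <= tb * 3.
  case: Ib => [[Eb _]|[ti [p [o [Eb [Hp' [Hh [Hti HR]]]]]]]]; subst ib; lia.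
rewrite Eka Ekb; apply: mulN_lt => //; lia.
Qed.

Definition is_bc j ts k v := is_bcast_at Hp lin j ts k v.

Lemma bcast_info j ts k v : is_bc j ts k v -> exists B, k = B * N /\ IsB j ts B /\ HasCertV j ts v B.
Proof.
move=> [i [r [Hl Hi]]]; have := proj1 (linS Hn Hexec HA2 HC _ _) Hl.
move=> [[t [z [-> [Bt [Ee _]]]]]|[[t [j2 [ts2 [v2 [ti [-> [Hj2 [I2 [L2 [Ee _]]]]]]]]]]|[t [p [ti [r' [-> [Hp' [P [Ee _]]]]]]]]]].
- subst i; move: Hi; rewrite Hp0 Bt /= => [[Ej Ets Ev]].
  have [_ [I1 V1]] := BzS Bt; exists t; split => //; move: I1 V1; by rewrite Ej Ets Ev.
- subst i; have He : ev_of j2 (H ti) by rewrite (inv_hist Hexec L2) /= eqxx.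
  move: Hi; rewrite (Hp_keep Hj2 He) (inv_hist Hexec L2) => [[Ej Ets Ev]]; subst j2 ts2 v2.
  exists t; split => //; split => //.
  have [v' [q [x [Hq [Hx Hc]]]]] := HasCert_V (proj1 I2).
  have [t0 [_ Lt0]] := cert_inv Hexec Hunf Hc Hx (proj1 (HC j) Hj2).
  have Et := HA2 (proj1 (HC j) Hj2) Lt0 L2; subst t0; rewrite L2 in Lt0; case: Lt0 => Ev; subst v'.
  by exists q, x.
- subst i; have [tr [j' [ts' [L _]]]] := proj1 P.
  have He : ev_of p (H ti) by rewrite (inv_hist Hexec L) /= eqxx.
  by move: Hi; rewrite (Hp_keep Hp' He) (inv_hist Hexec L).
Qed.

Lemma bcast_exists j ts tau : HasCert j ts tau -> exists B v, B <= tau /\ is_bc j ts (B * N) v.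
Proof.
move=> Hc; have [B IB] := Least_exists Hn Hc.
have HB := Least_le IB Hc.
have [v HV] := HasCert_V (proj1 IB).
exists B, v; split => //.
case: (boolP (j \in Cs)) => Hj.
- have [q [x [Hq [Hx Hcx]]]] := HV.
  have [ti [_ Lti]] := cert_inv Hexec Hunf Hcx Hx (proj1 (HC j) Hj).
  exists (ti * 3 + 2), RAck; split.
    apply/(linS Hn Hexec HA2 HC); right; left; by exists B, j, ts, v, ti.
  have He : ev_of j (H ti) by rewrite (inv_hist Hexec Lti) /= eqxx.
  by rewrite (Hp_keep Hj He) (inv_hist Hexec Lti).
- have Bt : Bz B = Some (j, ts, v) by apply: (Bz_of Hexec Hunf HC); split.
  exists (B * 3), RAck; split; last by rewrite Hp0 Bt.
  apply/(linS Hn Hexec HA2 HC); left; by exists B, (j, ts, v).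
Qed.

Lemma Lin_spec k i r p o : lin k = Some (i, r) -> Hp i = Some (EInv p o) -> seq_spec Hp lin k o r.
Proof.
move=> Hl Hi; have := proj1 (linS Hn Hexec HA2 HC _ _) Hl.
move=> [[t [z [Ek [Bt Ee]]]]|[[t [j2 [ts2 [v2 [ti [Ek [Hj2 [I2 [L2 Ee]]]]]]]]]|[t [p' [ti [r' [Ek [Hp' [P Ee]]]]]]]]];
  case: Ee => Ei Er; subst i r.
- move: Hi; rewrite Hp0 Bt /= => [[_ <-]] //.
- have He : ev_of j2 (H ti) by rewrite (inv_hist Hexec L2) /= eqxx.
  by move: Hi; rewrite (Hp_keep Hj2 He) (inv_hist Hexec L2) => [[_ <-]].
- have [tr [j [ts [L [R [/andP [Ht1 Ht2] Hcase]]]]]] := proj1 P.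
  have He : ev_of p' (H ti) by rewrite (inv_hist Hexec L) /= eqxx.
  move: Hi; rewrite (Hp_keep Hp' He) (inv_hist Hexec L) => [[_ <-]] /=.
  have Hsl : 0 < p'.+1 < N by apply/andP; split => //; rewrite ltnS ltn_ord.
  case: Hcase => [[-> Hnc]|[v [-> Hcv]]]; split.
  + move=> k' v' Hk' Hb _; exfalso.
    have [B [Ek' [IB _]]] := bcast_info Hb; subst k k'.
    have HBt := mulN_le_inv Hsl Hk'.
    by apply: Hnc; apply: (HasCert_mono Hexec HC HBt (proj1 IB)).
  + by [].
  + move=> k' v' Hk' Hb _.
    have [B [Ek' [IB HV]]] := bcast_info Hb.
    by rewrite (HasCertV_unique Hexec Hunf HV Hcv).
  + move=> Hno; exfalso.
    have [B [v' [HB Hb]]] := bcast_exists (HasCertV_HasCert Hcv).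
    apply: (Hno _ _ _ Hb); subst k; exact: mulN_le.
Qed.

End LinProof3.

Section LinProof4.
Variables (n f : nat) (V : eqType).
Local Notation proc := 'I_n.
Local Notation msg := (Defs.msg n V).
Local Notation prog := (Defs.prog n V).
Local Notation MPair := (@Defs.MPair n V).
Local Notation PRet := (@Defs.PRet n V).
Local Notation Idle := (@Defs.Idle n V).
Local Notation LStep := (@Defs.LStep n V).
Local Notation RAck := (@Defs.RAck V).
Local Notation OBcast := (@Defs.OBcast n V).
Local Notation ODeliver := (@Defs.ODeliver n V).
Local Notation LCorrupt := (@Defs.LCorrupt n V).
Local Notation deliver_prog := (@Defs.deliver_prog n f V).
Local Notation cert_val := (@Defs.cert_val n f V).
Local Notation find_cert := (@Defs.find_cert n f V).
Local Notation valid_cert := (@Defs.valid_cert n f V).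
Local Notation init_prog := (@Defs.init_prog n f V).
Local Notation refresh := (@Defs.refresh n f V).
Local Notation refresh_one := (@Defs.refresh_one n f V).
Local Notation exec_step := (@Defs.exec_step n f V).
Local Notation hist := (@Defs.hist n f V).
Local Notation is_execution := (@Defs.is_execution n f V).

Local Notation Running := (@Defs.Running n V).
Local Notation config := (Defs.config n V).
Local Notation label := (Defs.label n V).
Local Notation op := (Defs.op n V).
Local Notation event := (Defs.event n V).
Local Notation resp := (Defs.resp V).
Local Notation lstate := (Defs.lstate n V).

Variables (c : nat -> config) (l : nat -> label).
Hypothesis Hn : 2 * f < n.
Hypothesis Hexec : is_execution c l.
Hypothesis Hunf : unforgeable c l.
Hypothesis Hfair : fair c l.
Hypothesis HA1 : A1 c l.
Hypothesis HA2 : A2 c l.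
Variable Cs : {set proc}.
Hypothesis HC : forall p, p \in Cs <-> correct c p.

Local Notation mem t := (cmem (c t)).
Local Notation loc t := (cloc (c t)).
Local Notation corr t := (ccorr (c t)).
Local Notation H := (hist c l).
Local Notation HasCert := (@HasCert n f V c Cs).
Local Notation HasCertV := (@HasCertV n f V c Cs).
Local Notation IsB := (@IsB n f V c Cs).
Local Notation Resp := (@Resp n f V c l).
Local Notation Bz := (@Bz n f V c Cs).
Local Notation Hp := (@Hp n f V c l Cs).
Local Notation Lin := (@Lin n f V c l Cs).
Local Notation lin := (@lin n f V c l Cs).
Local Notation OpPt := (@OpPt n f V c l Cs).

Local Notation P := (fun e : event => ev_proc e \in Cs).
Definition PP (HH : history n V) t := if HH t is Some e then P e else false.

Lemma cnt_S (HH : history n V) i : cnt P HH i.+1 = cnt P HH i + PP HH i.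
Proof. by rewrite /cnt -addn1 iotaD count_cat /= addn0. Qed.

Lemma PP0 t : PP Hp (t * 3) = false.
Proof.
rewrite /PP Hp0; case E: (Bz t) => [z|] //=; apply/negbTE; exact: Bz_notC E.
Qed.

Lemma PP1 t : PP Hp (t * 3 + 1) = false.
Proof.
rewrite /PP Hp1; case E: (Bz t) => [z|] //=; apply/negbTE; exact: Bz_notC E.
Qed.

Lemma PP2 t : PP Hp (t * 3 + 2) = PP H t.
Proof. rewrite /PP Hp2; case: (H t) => [e|] //=; by case: ifP. Qed.

Lemma cnt_Hp t : cnt P Hp (t * 3 + 2) = cnt P H t.
Proof.
elim: t => [|t IH].
  rewrite (_ : 0 * 3 + 2 = 2) // (cnt_S Hp) (cnt_S Hp).
  have E0 := PP0 0; have E1 := PP1 0; rewrite mul0n ?add0n in E0 E1; by rewrite E0 E1.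
have -> : t.+1 * 3 + 2 = (t * 3 + 2).+1.+1.+1 by lia.
rewrite (cnt_S Hp) (cnt_S Hp) (cnt_S Hp) IH PP2 (cnt_S H).
have E0 := PP0 t.+1; have E1 := PP1 t.+1.
have Eq1 : t.+1 * 3 = (t * 3 + 2).+1 by lia.
have Eq2 : t.+1 * 3 + 1 = (t * 3 + 2).+2 by lia.
rewrite Eq1 in E0; rewrite Eq2 in E1.
by rewrite E0 E1 !addn0.
Qed.

Lemma restr : restr_eq P H Hp.
Proof.
move=> k e; split.
- move=> [i [Hi [Pe Hc]]]; exists (i * 3 + 2); split; first by rewrite Hp2 Hi Pe.
  split => //; by rewrite cnt_Hp.
- move=> [i [Hi [Pe Hc]]]; have [t [s [Hs Ei]]] := idx3 i; subst i.
  case: s Hs Hi Hc => [|[|[|]]] // _ Hi Hc.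
  + move: Hi; rewrite addn0 Hp0; case E: (Bz t) => [z|] //= [Ee]; subst e.
    by have := Bz_notC E; rewrite /= Pe.
  + move: Hi; rewrite Hp1; case E: (Bz t) => [z|] //= [Ee]; subst e.
    by have := Bz_notC E; rewrite /= Pe.
  + move: Hi; rewrite Hp2; case E: (H t) => [e'|] //; case: ifP => // _ [Ee]; subst e'.
    exists t; split => //; split => //; by rewrite -cnt_Hp.
Qed.

Lemma lin_Hp : linearizable Hp.
Proof.
split; first exact: wf_Hp.
exists lin; split.
  move=> k i r /(linS Hn Hexec HA2 HC) HL; exact: Lin_entry HL.
split.
  move=> k1 k2 i r1 r2 /(linS Hn Hexec HA2 HC) H1 /(linS Hn Hexec HA2 HC) H2; exact: Lin_once H1 H2.
split.
  move=> i Hc; have [k [r HL]] := Lin_complete Hn Hexec HC Hc; exists k, r; exact/(linS Hn Hexec HA2 HC).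
split.
  move=> a ja ra kb ib rb Hr Hlt /(linS Hn Hexec HA2 HC) Hb.
  have [ka [r [Hk HL]]] := Lin_rt Hn Hexec Hunf HA2 HC Hr Hlt Hb.
  exists ka, r; split => //; exact/(linS Hn Hexec HA2 HC).
move=> k i r p o Hl Hi; exact: Lin_spec Hl Hi.
Qed.

End LinProof4.


Unset Implicit Arguments.

Theorem theorem6p8 (n f : nat) (V : eqType) :
  2 * f < n ->
  forall (c : nat -> config n V) (l : nat -> label n V),
    is_execution f c l ->
    unforgeable c l ->
    fair c l ->
    A1 c l ->
    A2 c l ->
    byz_linearizable (correct c) (hist f c l) /\ resilient f c l.
Proof.
move=> Hn c l Hexec Hunf Hfair HA1 HA2; split.
- move=> C HC; exists (Hp f c l C); split.
  + by apply: lin_Hp.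
  + by apply: restr.
- by apply: resilience.
Qed.
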